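(* The class of models of $\mathbb{R}\mathsf{FR}$ has the joint embedding property and the amalgamation property.
   Context: An $\mathbb{R}$-forest is a complete extended ($[0,\infty]$-valued) metric space such that each set $\{y:d(x,y)<\infty\}$ is an $\mathbb{R}$-tree (uniquely arc-connected complete metric space with arcs isometric to real intervals). A function $f:X^2\to[0,1]$ is $1$-$1$-Lipschitz if $x\mapsto f(a,x)$ and $x\mapsto f(x,a)$ are $1$-Lipschitz for every $a\in X$. $\mathbb{R}\mathsf{FR}$ is the theory in the language consisting of an extended metric and a $[0,1]$-valued binary predicate $R$ saying that the underlying metric space is an $\mathbb{R}$-forest and $R$ is $1$-$1$-Lipschitz. The empty structure is allowed as a model. *)

(* Defs.v *)
From Stdlib Require Import Reals.
From Coquelicot Require Import Rbar.
Open Scope R_scope.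
Set Implicit Arguments.

Section Defs.
Variable X : Type.
Variable d : X -> X -> Rbar.

Definition ext_metric : Prop :=
  (forall x y, Rbar_le (Finite 0) (d x y)) /\
  (forall x, d x x = Finite 0) /\
  (forall x y, d x y = Finite 0 -> x = y) /\
  (forall x y, d x y = d y x) /\
  (forall x y z, Rbar_le (d x z) (Rbar_plus (d x y) (d y z))).

Definition cauchy_seq (u : nat -> X) : Prop :=
  forall eps, 0 < eps -> exists N, forall m n, (N <= m)%nat -> (N <= n)%nat ->
    Rbar_lt (d (u m) (u n)) (Finite eps).

Definition converges_to (u : nat -> X) (x : X) : Prop :=
  forall eps, 0 < eps -> exists N, forall n, (N <= n)%nat ->
    Rbar_lt (d (u n) x) (Finite eps).

Definition complete_in (S : X -> Prop) : Prop :=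
  forall u : nat -> X, (forall n, S (u n)) -> cauchy_seq u ->
    exists x, S x /\ converges_to u x.

Definition is_arc_in (S : X -> Prop) (a b : X) (g : R -> X) : Prop :=
  g 0 = a /\ g 1 = b /\
  (forall t, 0 <= t <= 1 -> S (g t)) /\
  (forall s t, 0 <= s <= 1 -> 0 <= t <= 1 -> g s = g t -> s = t) /\
  (forall t, 0 <= t <= 1 -> forall eps, 0 < eps -> exists delta, 0 < delta /\
     forall s, 0 <= s <= 1 -> Rabs (s - t) < delta ->
       Rbar_lt (d (g s) (g t)) (Finite eps)).

Definition arc_image (g : R -> X) (y : X) : Prop :=
  exists t, 0 <= t <= 1 /\ g t = y.

(* a subset A of X is isometric (for the induced metric) to a real interval
   (an arc being compact, this interval is a closed bounded one [0,L]) *)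
Definition isometric_to_interval (A : X -> Prop) : Prop :=
  exists (L : R) (f : R -> X), 0 <= L /\
    (forall y, A y <-> exists s, 0 <= s <= L /\ f s = y) /\
    (forall s t, 0 <= s <= L -> 0 <= t <= L -> d (f s) (f t) = Finite (Rabs (s - t))).

(* S, with the induced metric, is an R-tree: a complete metric space
   (finite distances) which is uniquely arc-connected and whose arcs are
   isometric to real intervals *)
Definition is_Rtree (S : X -> Prop) : Prop :=
  (forall x y, S x -> S y -> exists r, d x y = Finite r) /\
  complete_in S /\
  (forall a b, S a -> S b -> a <> b -> exists g, is_arc_in S a b g) /\
  (forall a b g h, is_arc_in S a b g -> is_arc_in S a b h ->
     forall y, arc_image g y <-> arc_image h y) /\
  (forall a b g, is_arc_in S a b g -> isometric_to_interval (arc_image g)).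

Definition is_Rforest : Prop :=
  ext_metric /\ complete_in (fun _ => True) /\
  forall x, is_Rtree (fun y => Rbar_lt (d x y) p_infty).

Definition one_one_lipschitz (P : X -> X -> R) : Prop :=
  (forall x y, 0 <= P x y <= 1) /\
  (forall a x y, Rbar_le (Finite (Rabs (P a x - P a y))) (d x y)) /\
  (forall a x y, Rbar_le (Finite (Rabs (P x a - P y a))) (d x y)).
End Defs.

(* a model of RFR (possibly empty carrier) *)
Record RFRmodel := {
  carrier :> Type;
  mdist : carrier -> carrier -> Rbar;
  mpred : carrier -> carrier -> R;
  m_forest : is_Rforest mdist;
  m_lip : one_one_lipschitz mdist mpred
}.

Definition embedding (M N : RFRmodel) (f : M -> N) : Prop :=
  (forall x y, mdist N (f x) (f y) = mdist M x y) /\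
  (forall x y, mpred N (f x) (f y) = mpred M x y).

Definition JEP : Prop :=
  forall A B : RFRmodel, exists (C : RFRmodel) (f : A -> C) (g : B -> C),
    embedding A C f /\ embedding B C g.

Definition AP : Prop :=
  forall (A B C : RFRmodel) (f : A -> B) (g : A -> C),
    embedding A B f -> embedding A C g ->
    exists (D : RFRmodel) (f' : B -> D) (g' : C -> D),
      embedding B D f' /\ embedding C D g' /\ forall a, f' (f a) = g' (g a).

(* Main.v *)
Require Import Defs.
From Stdlib Require Import Reals Lra Lia ClassicalEpsilon Classical ProofIrrelevance.
From Coquelicot Require Import Rbar.
Open Scope R_scope.
Set Implicit Arguments.

Ltac is_atom e :=
  lazymatch type of e with
  | Rbar => lazymatch e with
            | Finite _ => fail
            | p_infty => fail
            | m_infty => fail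
            | Rbar_plus _ _ => fail
            | _ => idtac end
  end.

Create HintDb rbnn.

Ltac gen_atom e :=
  let H := fresh "Hnn" in
  assert (H : Rbar_le (Finite 0) e) by (solve [eauto with rbnn]);
  let v := fresh "v" in
  set (v := e) in *; clearbody v;
  destruct v as [?r| |]; [ | | exfalso; exact H].

Ltac rb_clean :=
  repeat match goal with
  | H : Finite _ = Finite _ |- _ => injection H; clear H; intro H
  | H : p_infty = Finite _ |- _ => discriminate H
  | H : Finite _ = p_infty |- _ => discriminate H
  | H : p_infty = p_infty |- _ => clear H
  | H : True |- _ => clear H
  | H : False |- _ => destruct H
  end.

Ltac crunch :=
  repeat match goal with
  | |- context [?e] => is_atom e; gen_atom e
  | H : context [?e] |- _ => is_atom e; gen_atom e
  end; simpl in *; rb_clean;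
  try solve [lra | tauto | exfalso; lra | f_equal; lra].

Lemma lt_div_mul a b c : 0 < c -> a < b / c -> a * c < b.
Proof. intros Hc H. apply Rmult_lt_compat_r with (r := c) in H; auto.
  unfold Rdiv in H; rewrite Rmult_assoc, Rinv_l in H; lra. Qed.

Section Gen.
Variable X : Type.
Variable d : X -> X -> Rbar.
Hypothesis Hm : ext_metric d.

Lemma d_nn x y : Rbar_le (Finite 0) (d x y). Proof. apply Hm. Qed.
Lemma d_refl x : d x x = Finite 0. Proof. apply Hm. Qed.
Lemma d_eq0 x y : d x y = Finite 0 -> x = y. Proof. apply Hm. Qed.
Lemma d_sym x y : d x y = d y x. Proof. apply Hm. Qed.
Lemma d_tri x y z : Rbar_le (d x z) (Rbar_plus (d x y) (d y z)). Proof. apply Hm. Qed.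
Hint Resolve d_nn : rbnn.

Definition comp x y := Rbar_lt (d x y) p_infty.

Lemma comp_fin x y : comp x y -> exists r, d x y = Finite r /\ 0 <= r.
Proof. unfold comp; intros H. generalize (d_nn x y). destruct (d x y); simpl in *; try tauto.
  intros; exists r; auto. Qed.

Lemma comp_trans x y z : comp x y -> comp y z -> comp x z.
Proof. unfold comp; intros H1 H2. generalize (d_tri x y z). crunch. Qed.

Lemma comp_sym x y : comp x y -> comp y x.
Proof. unfold comp; rewrite d_sym; auto. Qed.

Lemma comp_refl x : comp x x.
Proof. unfold comp; rewrite d_refl; simpl; auto. Qed.

Lemma neq_dpos x y : x <> y -> forall r, d x y = Finite r -> 0 < r.
Proof. intros H r E. generalize (d_nn x y); rewrite E; simpl; intros.
  destruct H0; auto. subst. exfalso; apply H, d_eq0; auto. Qed.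

Lemma sub_arc S a b g s1 s2 : is_arc_in d S a b g -> 0 <= s1 -> s1 < s2 -> s2 <= 1 ->
  is_arc_in d S (g s1) (g s2) (fun t => g (s1 + t * (s2 - s1))).
Proof.
  intros [H0 [H1 [HS [Hi Hc]]]] h1 h2 h3. split; [|split; [|split; [|split]]].
  - f_equal; ring.
  - f_equal; ring.
  - intros t Ht; apply HS; nra.
  - intros s t Hs Ht E. assert (E2 : s1 + s * (s2 - s1) = s1 + t * (s2 - s1)) by (apply Hi; [nra|nra|exact E]).
    assert (H : (s - t) * (s2 - s1) = 0) by lra.
    apply Rmult_integral in H. destruct H; lra.
  - intros t Ht eps Heps. destruct (Hc (s1 + t * (s2 - s1))) with eps as [del [Hd Hdd]]; try nra; auto.
    exists (del / (s2 - s1)). split. apply Rdiv_lt_0_compat; lra.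
    intros s Hs Hst. apply Hdd. nra.
    replace (s1 + s * (s2 - s1) - (s1 + t * (s2 - s1))) with ((s - t) * (s2 - s1)) by ring.
    rewrite Rabs_mult, (Rabs_right (s2 - s1)) by lra.
    apply lt_div_mul in Hst; lra.
Qed.

Lemma sub_arc_img (g : R -> X) s1 s2 (y : X) : 0 <= s1 -> s1 < s2 -> s2 <= 1 ->
  (arc_image (fun t => g (s1 + t * (s2 - s1))) y <-> exists t, s1 <= t <= s2 /\ g t = y).
Proof.
  intros h1 h2 h3; split.
  - intros [t [Ht E]]. exists (s1 + t * (s2 - s1)); split; auto. nra.
  - intros [t [Ht E]]. exists ((t - s1) / (s2 - s1)). split.
    + split. apply Rmult_le_pos; try lra. apply Rlt_le, Rinv_0_lt_compat; lra.
      apply Rmult_le_reg_r with (s2 - s1). lra. unfold Rdiv; rewrite Rmult_assoc, Rinv_l; lra.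
    + rewrite <- E; f_equal. field. lra.
Qed.

Lemma rev_arc S a b g : is_arc_in d S a b g -> is_arc_in d S b a (fun t => g (1 - t)).
Proof.
  intros [H0 [H1 [HS [Hi Hc]]]]. split; [|split; [|split; [|split]]].
  - rewrite Rminus_0_r; auto.
  - rewrite Rminus_diag; auto.
  - intros t Ht; apply HS; lra.
  - intros s t Hs Ht E; apply Hi in E; lra.
  - intros t Ht eps Heps. destruct (Hc (1 - t)) with eps as [del [Hd Hdd]]; try lra; auto.
    exists del; split; auto. intros s Hs Hst. apply Hdd. lra.
    replace (1 - s - (1 - t)) with (-(s - t)) by ring. rewrite Rabs_Ropp; auto.
Qed.

Lemma rev_arc_img (g : R -> X) (y : X) : arc_image (fun t => g (1 - t)) y <-> arc_image g y.
Proof. split; intros [t [Ht E]]; exists (1 - t); split; try lra; auto.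
  rewrite <- E; f_equal; ring. Qed.

Lemma arc_neq S (a b : X) g : is_arc_in d S a b g -> a <> b.
Proof. intros [H0 [H1 [HS [Hi Hc]]]] E. subst. assert (0 = 1) by (apply Hi; try lra; congruence). lra. Qed.

Definition isom_on (L : R) (f : R -> X) :=
  forall s t, 0 <= s <= L -> 0 <= t <= L -> d (f s) (f t) = Finite (Rabs (s - t)).

Lemma isom_arc S L f : 0 < L -> isom_on L f -> (forall s, 0 <= s <= L -> S (f s)) ->
  is_arc_in d S (f 0) (f L) (fun t => f (t * L)).
Proof.
  intros HL Hf HS. split; [|split; [|split; [|split]]].
  - f_equal; ring.
  - f_equal; ring.
  - intros t Ht; apply HS; nra.
  - intros s t Hs Ht E. assert (d (f (s*L)) (f (t*L)) = Finite 0) by (rewrite E; apply d_refl).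
    rewrite Hf in H by nra. injection H; intro H'.
    assert (s * L - t * L = 0). { destruct (Rcase_abs (s*L - t*L)); [rewrite Rabs_left in H'|rewrite Rabs_right in H']; lra. }
    assert ((s - t) * L = 0) by lra. apply Rmult_integral in H1; destruct H1; lra.
  - intros t Ht eps Heps. exists (eps / L). split. apply Rdiv_lt_0_compat; lra.
    intros s Hs Hst. rewrite Hf by nra. simpl.
    replace (s * L - t * L) with ((s - t) * L) by ring. rewrite Rabs_mult, (Rabs_right L) by lra.
    apply lt_div_mul in Hst; lra.
Qed.

Lemma isom_arc_img L (f : R -> X) (y : X) : 0 < L ->
  (arc_image (fun t => f (t * L)) y <-> exists s, 0 <= s <= L /\ f s = y).
Proof. intros HL; split.
  - intros [t [Ht E]]. exists (t * L); split; auto; nra.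
  - intros [s [Hs E]]. exists (s / L); split.
    + split. apply Rmult_le_pos; try lra. apply Rlt_le, Rinv_0_lt_compat; lra.
      apply Rmult_le_reg_r with L. lra. unfold Rdiv; rewrite Rmult_assoc, Rinv_l; lra.
    + rewrite <- E; f_equal; field; lra.
Qed.

End Gen.

Lemma ivt_up (h : R -> R) a b y : a < b ->
  (forall t, a <= t <= b -> forall eps, 0 < eps -> exists del, 0 < del /\
     forall s, a <= s <= b -> Rabs (s - t) < del -> Rabs (h s - h t) < eps) ->
  h a <= y <= h b -> exists c, a <= c <= b /\ h c = y.
Proof.
  intros Hab Hc Hy.
  set (E := fun x => a <= x <= b /\ h x <= y).
  assert (HB : bound E) by (exists b; intros x [Hx _]; lra).
  assert (HE : exists x, E x) by (exists a; split; lra).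
  destruct (completeness E HB HE) as [c [Hub Hlub]].
  assert (Hac : a <= c) by (apply Hub; split; lra).
  assert (Hcb : c <= b) by (apply Hlub; intros x [Hx _]; lra).
  exists c; split; [lra|].
  destruct (Rtotal_order (h c) y) as [Hlt|[Heq|Hgt]]; auto.
  - exfalso. assert (c < b) by (destruct (Req_dec c b); [subst; lra | lra]).
    destruct (Hc c (conj Hac Hcb) (y - h c)) as [del [Hd Hdd]]; [lra|].
    set (s := Rmin (c + del / 2) b).
    assert (Hs1 : c < s) by (unfold s; apply Rmin_glb_lt; lra).
    assert (Hs2 : s <= b) by (unfold s; apply Rmin_r).
    assert (Hs3 : s <= c + del/2) by (unfold s; apply Rmin_l).
    assert (E s). { split; [lra|]. assert (Rabs (h s - h c) < y - h c) by (apply Hdd; [lra| rewrite Rabs_right; lra]).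
      apply Rabs_def2 in H0; lra. }
    apply Hub in H0; lra.
  - exfalso. assert (a < c) by (destruct (Req_dec a c); [subst; lra | lra]).
    destruct (Hc c (conj Hac Hcb) (h c - y)) as [del [Hd Hdd]]; [lra|].
    assert (c <= c - Rmin del (c - a)).
    { apply Hlub. intros x [Hx Hxy]. destruct (Rle_dec x (c - Rmin del (c - a))); auto.
      exfalso. assert (x <= c) by (apply Hub; split; auto).
      assert (Rmin del (c - a) <= del) by apply Rmin_l.
      assert (Rabs (h x - h c) < h c - y) by (apply Hdd; [lra | rewrite Rabs_left1; lra]).
      apply Rabs_def2 in H2; lra. }
    assert (0 < Rmin del (c - a)) by (apply Rmin_glb_lt; lra). lra.
Qed.

Lemma ivt_down (h : R -> R) a b y : a < b ->
  (forall t, a <= t <= b -> forall eps, 0 < eps -> exists del, 0 < del /\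
     forall s, a <= s <= b -> Rabs (s - t) < del -> Rabs (h s - h t) < eps) ->
  h b <= y <= h a -> exists c, a <= c <= b /\ h c = y.
Proof.
  intros Hab Hc Hy. destruct (@ivt_up (fun x => - h x) a b (-y)) as [c [Hc1 Hc2]]; auto.
  - intros t Ht eps He. destruct (Hc t Ht eps He) as [del [Hd Hdd]]. exists del; split; auto.
    intros s Hs Hst. replace (- h s - - h t) with (- (h s - h t)) by ring. rewrite Rabs_Ropp; auto.
  - lra.
  - exists c; split; auto; lra.
Qed.

Lemma endpoint_real (h : R -> R) L : 0 < L ->
  (forall t, 0 <= t <= 1 -> 0 <= h t <= L) ->
  (forall s t, 0 <= s <= 1 -> 0 <= t <= 1 -> h s = h t -> s = t) ->
  (forall s, 0 <= s <= L -> exists t, 0 <= t <= 1 /\ h t = s) ->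
  (forall t, 0 <= t <= 1 -> forall eps, 0 < eps -> exists del, 0 < del /\
     forall s, 0 <= s <= 1 -> Rabs (s - t) < del -> Rabs (h s - h t) < eps) ->
  h 0 = 0 \/ h 0 = L.
Proof.
  intros HL Hr Hi Hs Hc.
  destruct (Req_dec (h 0) 0) as [E|N0]; auto. destruct (Req_dec (h 0) L) as [E|NL]; auto.
  exfalso. assert (H0 := Hr 0 ltac:(lra)).
  destruct (Hs 0 ltac:(lra)) as [t0 [Ht0 E0]]. destruct (Hs L ltac:(lra)) as [t1 [Ht1 E1]].
  assert (t0 <> 0) by (intro; subst; auto). assert (t1 <> 0) by (intro; subst; auto).
  assert (t0 <> t1) by (intro; subst; lra).
  assert (Hc' : forall a b, 0 <= a -> b <= 1 -> forall t, a <= t <= b -> forall eps, 0 < eps -> exists del, 0 < del /\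
     forall s, a <= s <= b -> Rabs (s - t) < del -> Rabs (h s - h t) < eps).
  { intros a b Ha Hb t Ht eps He. destruct (Hc t ltac:(lra) eps He) as [del [Hd Hdd]].
    exists del; split; auto. intros s Hs' Hst; apply Hdd; auto; lra. }
  destruct (Rlt_dec t0 t1).
  - destruct (@ivt_up h t0 t1 (h 0)) as [c [Hc1 Hc2]]; auto. apply Hc'; lra. lra.
    assert (c = 0) by (apply Hi; auto; lra). lra.
  - destruct (@ivt_down h t1 t0 (h 0)) as [c [Hc1 Hc2]]; try lra. apply Hc'; lra.
    assert (c = 0) by (apply Hi; auto; lra). lra.
Qed.

Section Gen2.
Variable X : Type.
Variable d : X -> X -> Rbar.
Hypothesis Hm : ext_metric d.


Lemma arc_S S S' (a b : X) g : is_arc_in d S a b g -> (forall t, 0 <= t <= 1 -> S' (g t)) -> is_arc_in d S' a b g.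
Proof. intros [H0 [H1 [HS [Hi Hc]]]] H. repeat split; auto. Qed.

Lemma arc_image_ext (g h : R -> X) y : (forall t, 0 <= t <= 1 -> g t = h t) -> (arc_image g y <-> arc_image h y).
Proof. intros H; split; intros [t [Ht E]]; exists t; split; auto; rewrite <- E; [symmetry|]; auto. Qed.

Lemma concat_arc S (u w v : X) al be : is_arc_in d S u w al -> is_arc_in d S w v be ->
  (forall y, arc_image al y -> arc_image be y -> y = w) ->
  exists ga, is_arc_in d S u v ga /\ forall y, arc_image ga y <-> arc_image al y \/ arc_image be y.
Proof.
  intros [A0 [A1 [AS [Ai Ac]]]] [B0 [B1 [BS [Bi Bc]]]] Hint.
  set (ga := fun t => if Rle_dec t (1/2) then al (2 * t) else be (2 * t - 1)).
  assert (Ga : forall t, t <= 1/2 -> ga t = al (2 * t)) by (intros; unfold ga; destruct Rle_dec; auto; lra).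
  assert (Gb : forall t, 1/2 < t -> ga t = be (2 * t - 1)) by (intros; unfold ga; destruct Rle_dec; auto; lra).
  assert (Gh : ga (1/2) = w) by (rewrite Ga by lra; replace (2 * (1/2)) with 1 by field; auto).
  exists ga. split; [split; [|split; [|split; [|split]]] |].
  - rewrite Ga by lra; rewrite Rmult_0_r; auto.
  - rewrite Gb by lra; replace (2 * 1 - 1) with 1 by ring; auto.
  - intros t Ht. destruct (Rle_dec t (1/2)); [rewrite Ga by lra; apply AS | rewrite Gb by lra; apply BS]; lra.
  - intros s t Hs Ht E.
    destruct (Rle_dec s (1/2)); destruct (Rle_dec t (1/2));
      [rewrite Ga, Ga in E by lra | rewrite Ga, Gb in E by lra | rewrite Gb, Ga in E by lra | rewrite Gb, Gb in E by lra].
    + apply Ai in E; lra.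
    + assert (al (2 * s) = w) by (apply Hint; [exists (2*s); split; auto; lra | exists (2*t-1); split; auto; lra]).
      assert (be (2 * t - 1) = w) by congruence.
      assert (2 * t - 1 = 0) by (apply Bi; try lra; congruence). lra.
    + assert (al (2 * t) = w) by (apply Hint; [exists (2*t); split; auto; lra | exists (2*s-1); split; auto; lra]).
      assert (be (2 * s - 1) = w) by congruence.
      assert (2 * s - 1 = 0) by (apply Bi; try lra; congruence). lra.
    + apply Bi in E; lra.
  - intros t Ht eps He.
    destruct (Rlt_dec t (1/2)) as [Tl|Tl]; [|destruct (Rlt_dec (1/2) t) as [Tr|Tr]].
    + destruct (Ac (2 * t) ltac:(lra) eps He) as [del [Hd Hdd]].
      exists (Rmin (del / 2) (1/2 - t)). split. apply Rmin_glb_lt; lra.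
      intros s Hs Hst. assert (Rmin (del / 2) (1/2 - t) <= del/2) by apply Rmin_l.
      assert (Rmin (del / 2) (1/2 - t) <= 1/2 - t) by apply Rmin_r.
      apply Rabs_def2 in Hst. rewrite Ga, Ga by lra. apply Hdd. lra. apply Rabs_def1; lra.
    + destruct (Bc (2 * t - 1) ltac:(lra) eps He) as [del [Hd Hdd]].
      exists (Rmin (del / 2) (t - 1/2)). split. apply Rmin_glb_lt; lra.
      intros s Hs Hst. assert (Rmin (del / 2) (t - 1/2) <= del/2) by apply Rmin_l.
      assert (Rmin (del / 2) (t - 1/2) <= t - 1/2) by apply Rmin_r.
      apply Rabs_def2 in Hst. rewrite Gb, Gb by lra. apply Hdd. lra. apply Rabs_def1; lra.
    + assert (t = 1/2) by lra. subst t. rewrite Gh.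
      destruct (Ac 1 ltac:(lra) eps He) as [d1 [Hd1 Hdd1]].
      destruct (Bc 0 ltac:(lra) eps He) as [d2 [Hd2 Hdd2]].
      exists (Rmin (d1 / 2) (d2 / 2)). split. apply Rmin_glb_lt; lra.
      intros s Hs Hst. assert (Rmin (d1 / 2) (d2 / 2) <= d1/2) by apply Rmin_l.
      assert (Rmin (d1 / 2) (d2 / 2) <= d2/2) by apply Rmin_r. apply Rabs_def2 in Hst.
      destruct (Rle_dec s (1/2)).
      * rewrite Ga by lra. rewrite <- A1. apply Hdd1. lra. apply Rabs_def1; lra.
      * rewrite Gb by lra. rewrite <- B0. apply Hdd2. lra. apply Rabs_def1; lra.
  - intros y; split.
    + intros [t [Ht E]]. destruct (Rle_dec t (1/2)).
      * left. exists (2 * t). split. lra. rewrite <- E, Ga by lra; auto.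
      * right. exists (2 * t - 1). split. lra. rewrite <- E, Gb by lra; auto.
    + intros [[t [Ht E]]|[t [Ht E]]].
      * exists (t / 2). split. lra. rewrite Ga by lra. rewrite <- E; f_equal; field.
      * destruct (Req_dec t 0).
        -- subst t. exists (1/2). split. lra. rewrite Gh, <- B0; auto.
        -- exists ((t + 1) / 2). split. lra. rewrite Gb by lra. rewrite <- E; f_equal; field.
Qed.

Lemma endpoint_param S (a b : X) g L phi : is_arc_in d S a b g -> 0 <= L ->
  (forall y, arc_image g y <-> exists s, 0 <= s <= L /\ phi s = y) -> isom_on d L phi ->
  exists psi, isom_on d L psi /\ psi 0 = a /\ psi L = b /\ d a b = Finite L /\
     (forall y, arc_image g y <-> exists s, 0 <= s <= L /\ psi s = y).
Proof.
  intros Harc HL Himg Hiso. pose proof Harc as [G0 [G1 [GS [Gi Gc]]]].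
  assert (Hex : forall t, exists s, 0 <= t <= 1 -> 0 <= s <= L /\ phi s = g t).
  { intros t. destruct (classic (0 <= t <= 1)) as [Ht|Ht].
    - destruct (proj1 (Himg (g t))) as [s Hs]. exists t; split; auto. exists s; auto.
    - exists 0; intros; contradiction. }
  set (h := fun t => proj1_sig (constructive_indefinite_description _ (Hex t))).
  assert (hP : forall t, 0 <= t <= 1 -> 0 <= h t <= L /\ phi (h t) = g t).
  { intros t Ht. unfold h. destruct constructive_indefinite_description; simpl; auto. }
  assert (hd : forall s t, 0 <= s <= 1 -> 0 <= t <= 1 -> d (g s) (g t) = Finite (Rabs (h s - h t))).
  { intros s t Hs Ht. destruct (hP s Hs) as [A1 A2]. destruct (hP t Ht) as [B1 B2].
    rewrite <- A2, <- B2. apply Hiso; auto. }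
  assert (hi : forall s t, 0 <= s <= 1 -> 0 <= t <= 1 -> h s = h t -> s = t).
  { intros s t Hs Ht E. apply Gi; auto. destruct (hP s Hs) as [_ A2]. destruct (hP t Ht) as [_ B2]. congruence. }
  assert (hs : forall s, 0 <= s <= L -> exists t, 0 <= t <= 1 /\ h t = s).
  { intros s Hs. destruct (proj2 (Himg (phi s))) as [t [Ht E]]. exists s; auto.
    exists t; split; auto. destruct (hP t Ht) as [A1 A2].
    assert (d (phi (h t)) (phi s) = Finite 0) by (rewrite A2, E; apply d_refl; auto).
    rewrite Hiso in H by auto. injection H; intro H'.
    destruct (Rcase_abs (h t - s)); [rewrite Rabs_left in H'|rewrite Rabs_right in H']; lra. }
  assert (hc : forall t, 0 <= t <= 1 -> forall eps, 0 < eps -> exists del, 0 < del /\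
     forall s, 0 <= s <= 1 -> Rabs (s - t) < del -> Rabs (h s - h t) < eps).
  { intros t Ht eps He. destruct (Gc t Ht eps He) as [del [Hd Hdd]]. exists del; split; auto.
    intros s Hs Hst. specialize (Hdd s Hs Hst). rewrite hd in Hdd by auto. exact Hdd. }
  assert (HL' : 0 < L).
  { destruct HL as [HL|HL]; auto. subst L. exfalso. apply (arc_neq Harc).
    rewrite <- G0, <- G1. destruct (hP 0 ltac:(lra)) as [A1 A2]. destruct (hP 1 ltac:(lra)) as [B1 B2].
    rewrite <- A2, <- B2. f_equal. lra. }
  assert (E0 : h 0 = 0 \/ h 0 = L) by (apply endpoint_real; auto; intros t Ht; apply hP; auto).
  assert (E1 : h 1 = 0 \/ h 1 = L).
  { assert (H := @endpoint_real (fun t => h (1 - t)) L HL').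
    simpl in H. rewrite Rminus_0_r in H. apply H.
    - intros t Ht; apply hP; lra.
    - intros s t Hs Ht E; apply hi in E; lra.
    - intros s Hs. destruct (hs s Hs) as [t [Ht E]]. exists (1 - t); split. lra. rewrite <- E; f_equal; ring.
    - intros t Ht eps He. destruct (hc (1 - t) ltac:(lra) eps He) as [del [Hd Hdd]]. exists del; split; auto.
      intros s Hs Hst. apply Hdd. lra. replace (1 - s - (1 - t)) with (- (s - t)) by ring. rewrite Rabs_Ropp; auto. }
  assert (N : h 0 <> h 1) by (intro E; apply hi in E; lra).
  assert (Dab : d a b = Finite L).
  { rewrite <- G0, <- G1, hd by lra. f_equal. destruct E0 as [E0|E0]; destruct E1 as [E1|E1]; rewrite E0, E1 in *; try lra.
    rewrite Rminus_0_l, Rabs_Ropp, Rabs_right; lra. rewrite Rminus_0_r, Rabs_right; lra. }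
  destruct E0 as [E0|E0]; destruct E1 as [E1|E1]; rewrite ?E0, ?E1 in N; try lra.
  - exists phi. repeat split; auto.
    + destruct (hP 0 ltac:(lra)) as [_ P0]; rewrite E0 in P0; rewrite P0; auto.
    + destruct (hP 1 ltac:(lra)) as [_ P0]; rewrite E1 in P0; rewrite P0; auto.
    + intros H; apply Himg; auto.
    + intros H; apply Himg; auto.
  - exists (fun s => phi (L - s)). repeat split; auto.
    + intros s t Hs Ht. rewrite Hiso by lra. f_equal. replace (L - s - (L - t)) with (- (s - t)) by ring. apply Rabs_Ropp.
    + destruct (hP 0 ltac:(lra)) as [_ P0]; rewrite E0 in P0; rewrite Rminus_0_r, P0; auto.
    + destruct (hP 1 ltac:(lra)) as [_ P0]; rewrite E1 in P0; rewrite Rminus_diag, P0; auto.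
    + intros H. apply Himg in H. destruct H as [s [Hs E]]. exists (L - s); split. lra. rewrite <- E; f_equal; ring.
    + intros [s [Hs E]]. apply Himg. exists (L - s); split; auto. lra.
Qed.

End Gen2.

Section Transport.
Variables X Y : Type.
Variable d : X -> X -> Rbar.
Variable e : Y -> Y -> Rbar.
Hypothesis Hd : ext_metric d.
Hypothesis He : ext_metric e.
Variable i : X -> Y.
Hypothesis Hi : forall x y, e (i x) (i y) = d x y.

Lemma iso_inj x y : i x = i y -> x = y.
Proof. intros E. apply (d_eq0 Hd). rewrite <- Hi, E. apply (d_refl He). Qed.

Lemma arc_map S S' a b g : is_arc_in d S a b g -> (forall t, 0 <= t <= 1 -> S' (i (g t))) ->
  is_arc_in e S' (i a) (i b) (fun t => i (g t)).
Proof.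
  intros [G0 [G1 [GS [Gi Gc]]]] HS. split; [|split; [|split; [|split]]].
  - congruence. - congruence. - auto.
  - intros s t Hs Ht E. apply Gi; auto. apply iso_inj; auto.
  - intros t Ht eps Heps. destruct (Gc t Ht eps Heps) as [del [H1 H2]]. exists del; split; auto.
    intros s Hs Hst. rewrite Hi. auto.
Qed.

Lemma arc_map_img (g : R -> X) z : arc_image (fun t => i (g t)) z <-> exists x, z = i x /\ arc_image g x.
Proof. split.
  - intros [t [Ht E]]. exists (g t). split; auto. exists t; auto.
  - intros [x [E [t [Ht E']]]]. exists t; split; auto. congruence.
Qed.

Lemma arc_pull S' u v ga : is_arc_in e S' u v ga -> (forall t, 0 <= t <= 1 -> exists x, ga t = i x) ->
  exists g, (forall t, 0 <= t <= 1 -> ga t = i (g t)) /\ is_arc_in d (fun _ => True) (g 0) (g 1) g.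
Proof.
  intros Harc Hx. pose proof Harc as [G0 [G1 [GS [Gi Gc]]]].
  destruct (Hx 0 ltac:(lra)) as [x0 _].
  assert (Hex : forall t, exists x, 0 <= t <= 1 -> ga t = i x).
  { intros t. destruct (classic (0 <= t <= 1)) as [Ht|Ht].
    - destruct (Hx t Ht) as [x Ex]. exists x; auto.
    - exists x0; intros; contradiction. }
  set (g := fun t => proj1_sig (constructive_indefinite_description _ (Hex t))).
  assert (gP : forall t, 0 <= t <= 1 -> ga t = i (g t)).
  { intros t Ht. unfold g. destruct constructive_indefinite_description; simpl; auto. }
  exists g. split; auto. split; [|split; [|split; [|split]]]; auto.
  - intros s t Hs Ht E. apply Gi; auto. rewrite gP, gP by auto. congruence.
  - intros t Ht eps Heps. destruct (Gc t Ht eps Heps) as [del [H1 H2]]. exists del; split; auto.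
    intros s Hs Hst. rewrite <- Hi, <- gP, <- gP by auto. auto.
Qed.

End Transport.

Section Forest.
Variable X : Type.
Variable d : X -> X -> Rbar.
Hypothesis Hf : is_Rforest d.
Let Hm : ext_metric d := proj1 Hf.
Let nn x y : Rbar_le (Finite 0) (d x y) := d_nn Hm x y.
Local Hint Resolve nn : rbnn.

Lemma rtree x : is_Rtree d (comp d x).
Proof. apply Hf. Qed.

Lemma f_complete : complete_in d (fun _ => True).
Proof. apply Hf. Qed.

Lemma arc_exists a b : comp d a b -> a <> b -> exists g, is_arc_in d (comp d a) a b g.
Proof. intros. destruct (rtree a) as [_ [_ [H1 _]]]. apply H1; auto. apply comp_refl; auto. Qed.

Lemma arc_unique a b g h : is_arc_in d (comp d a) a b g -> is_arc_in d (comp d a) a b h ->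
  forall y, arc_image g y <-> arc_image h y.
Proof. intros. destruct (rtree a) as [_ [_ [_ [H1 _]]]]. eapply H1; eauto. Qed.

Lemma geo_param u v : comp d u v -> exists L psi, 0 <= L /\ d u v = Finite L /\ psi 0 = u /\ psi L = v /\
  isom_on d L psi /\ (forall s, 0 <= s <= L -> comp d u (psi s)) /\
  (forall g, is_arc_in d (comp d u) u v g -> forall y, arc_image g y <-> exists s, 0 <= s <= L /\ psi s = y).
Proof.
  intros Huv. destruct (classic (u = v)) as [E|N].
  - subst v. exists 0, (fun _ => u). split; [lra|]. split; [apply d_refl; auto|].
    split; auto. split; auto. split.
    + intros s t Hs Ht. rewrite d_refl by auto. f_equal. replace (s - t) with 0 by lra. symmetry; apply Rabs_R0.
    + split. intros; apply comp_refl; auto.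
      intros g Hg. exfalso. apply (arc_neq Hg); auto.
  - destruct (arc_exists Huv N) as [g0 Hg0].
    destruct (rtree u) as [_ [_ [_ [_ Hiso]]]].
    destruct (Hiso _ _ _ Hg0) as [L [phi [HL [Himg Hph]]]].
    destruct (endpoint_param Hm Hg0 HL Himg Hph) as [psi [P1 [P2 [P3 [P4 P5]]]]].
    exists L, psi. do 5 (split; auto). split.
    + intros s Hs. destruct (proj2 (P5 (psi s))) as [t [Ht E]]. exists s; auto.
      rewrite <- E. destruct Hg0 as [_ [_ [HS _]]]. auto.
    + intros g Hg y; split; intros Hy. apply P5. apply (arc_unique Hg0 Hg). auto.
      apply (arc_unique Hg0 Hg). apply P5; auto.
Qed.

Lemma arc_additive u v g t : is_arc_in d (comp d u) u v g -> 0 <= t <= 1 ->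
  exists L s, d u v = Finite L /\ d u (g t) = Finite s /\ d (g t) v = Finite (L - s) /\ 0 <= s <= L.
Proof.
  intros Hg Ht. assert (Huv : comp d u v) by (destruct Hg as [_ [H1 [HS _]]]; rewrite <- H1; apply HS; lra).
  destruct (@geo_param u v Huv) as [L [psi [HL [D [P0 [PL [Pi [Pc Pimg]]]]]]]].
  destruct (proj1 (Pimg g Hg (g t))) as [s [Hs E]]. exists t; auto.
  exists L, s. rewrite <- E, <- P0, <- PL. rewrite !Pi by lra.
  repeat split; try lra; f_equal; unfold Rabs; destruct Rcase_abs; lra.
Qed.

End Forest.

Section Gate.
Variables XA XC : Type.
Variable dA : XA -> XA -> Rbar.
Variable dC : XC -> XC -> Rbar.
Hypothesis HA : is_Rforest dA.
Hypothesis HC : is_Rforest dC.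
Let HmA : ext_metric dA := proj1 HA.
Let HmC : ext_metric dC := proj1 HC.
Let nnA x y : Rbar_le (Finite 0) (dA x y) := d_nn HmA x y.
Let nnC x y : Rbar_le (Finite 0) (dC x y) := d_nn HmC x y.
Local Hint Resolve nnA nnC : rbnn.
Variable g : XA -> XC.
Hypothesis Hg : forall x y, dC (g x) (g y) = dA x y.

Lemma closedA c : (forall eps, 0 < eps -> exists a, Rbar_lt (dC c (g a)) (Finite eps)) -> exists a, c = g a.
Proof.
  intros H.
  assert (Hn : forall n : nat, exists a, Rbar_lt (dC c (g a)) (Finite (/ INR (S n)))).
  { intros n. apply H. apply Rinv_0_lt_compat, lt_0_INR; lia. }
  set (an := fun n => proj1_sig (constructive_indefinite_description _ (Hn n))).
  assert (HnP : forall n, Rbar_lt (dC c (g (an n))) (Finite (/ INR (S n)))).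
  { intros n; unfold an; destruct constructive_indefinite_description; auto. }
  assert (Hinv : forall n N : nat, (N <= n)%nat -> / INR (S n) <= / INR (S N)).
  { intros n N HnN. apply Rinv_le_contravar. apply lt_0_INR; lia. apply le_INR; lia. }
  assert (Hcau : cauchy_seq dA an).
  { intros eps He. destruct (archimed_cor1 (eps / 2)) as [N [HN HN0]]. lra.
    exists N. intros m n Hm Hn'. rewrite <- Hg.
    assert (T := d_tri HmC (g (an m)) c (g (an n))).
    assert (Hm1 := HnP m). assert (Hn1 := HnP n). rewrite (d_sym HmC) in Hm1.
    assert (/ INR (S m) <= / INR N). { apply Rinv_le_contravar. apply lt_0_INR; lia. apply le_INR; lia. }
    assert (/ INR (S n) <= / INR N). { apply Rinv_le_contravar. apply lt_0_INR; lia. apply le_INR; lia. }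
    crunch. }
  destruct (proj1 (proj2 HA) an (fun _ => I) Hcau) as [a [_ Ha]].
  exists a. apply (d_eq0 HmC).
  assert (forall eps, 0 < eps -> Rbar_lt (dC c (g a)) (Finite eps)).
  { intros eps He. destruct (Ha (eps/2) ltac:(lra)) as [N1 HN1].
    destruct (archimed_cor1 (eps / 2)) as [N2 [HN2 HN20]]. lra.
    set (n := max N1 N2). specialize (HN1 n ltac:(lia)). assert (Hc1 := HnP n).
    assert (T := d_tri HmC c (g (an n)) (g a)). rewrite Hg in T.
    assert (/ INR (S n) <= / INR N2). { apply Rinv_le_contravar. apply lt_0_INR; lia. apply le_INR; lia. }
    crunch. }
  generalize (nnC c (g a)). destruct (dC c (g a)) as [r| |]; simpl; intros Hr.
  - f_equal. destruct Hr as [Hr|Hr]; auto. specialize (H0 (r/2) ltac:(lra)). simpl in H0. lra.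
  - specialize (H0 1 ltac:(lra)). simpl in H0. contradiction.
  - contradiction.
Qed.

Lemma convexA a1 a2 be : is_arc_in dC (comp dC (g a1)) (g a1) (g a2) be ->
  forall t, 0 <= t <= 1 -> exists a, be t = g a.
Proof.
  intros Hbe t Ht. pose proof Hbe as [B0 [B1 [BS _]]].
  assert (N : a1 <> a2) by (intro; subst; apply (arc_neq Hbe); auto).
  assert (Hc : comp dA a1 a2) by (unfold comp; rewrite <- Hg, <- B1; apply BS; lra).
  destruct (arc_exists HA Hc N) as [al Hal].
  assert (Hm : is_arc_in dC (comp dC (g a1)) (g a1) (g a2) (fun t => g (al t))).
  { apply (arc_map HmA HmC g Hg _ Hal). intros s Hs. unfold comp; rewrite Hg. destruct Hal as [_ [_ [HS _]]]. apply HS; auto. }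
  destruct (proj2 (arc_unique HC Hm Hbe (be t))) as [s [Hs E]]. exists t; auto.
  exists (al s); auto.
Qed.

Definition gate c p := comp dC c (g p) /\ forall a, dC c (g a) = Rbar_plus (dC c (g p)) (dA p a).

Lemma gate_far c : ~ (exists a, comp dC c (g a)) -> forall a, dC c (g a) = p_infty.
Proof. intros H a. generalize (nnC c (g a)). destruct (dC c (g a)) eqn:E; simpl; intros; auto.
  exfalso; apply H; exists a; unfold comp; rewrite E; simpl; auto. contradiction. Qed.

Lemma gate_lemma a0 c be : is_arc_in dC (comp dC (g a0)) (g a0) c be ->
  (forall t, 0 <= t <= 1 -> forall a, be t = g a -> be t = g a0) -> gate c a0.
Proof.
  intros Hbe Hin. pose proof Hbe as [B0 [B1 [BS [Bi Bc]]]].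
  assert (Hc : comp dC c (g a0)) by (apply comp_sym; auto; rewrite <- B1; apply BS; lra).
  split; auto. intros a.
  destruct (classic (a = a0)) as [E|Na].
  { subst. rewrite (d_refl HmA). crunch. }
  destruct (classic (comp dA a0 a)) as [Ca|Ca].
  2:{ assert (dA a0 a = p_infty) by (unfold comp in Ca; generalize (nnA a0 a); destruct (dA a0 a); simpl in *; tauto).
      assert (T := d_tri HmC (g a0) c (g a)). rewrite Hg in T. rewrite (d_sym HmC (g a0) c) in T.
      unfold comp in Hc. rewrite H. rewrite H in T. crunch. }
  destruct (arc_exists HA Ca (not_eq_sym Na)) as [al Hal].
  assert (Hm : is_arc_in dC (comp dC c) (g a0) (g a) (fun t => g (al t))).
  { apply (arc_map HmA HmC g Hg _ Hal). intros s Hs. apply comp_trans with (g a0); auto.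
    unfold comp; rewrite Hg. destruct Hal as [_ [_ [HS _]]]. apply HS; auto. }
  assert (Hr : is_arc_in dC (comp dC c) c (g a0) (fun t => be (1 - t))).
  { apply arc_S with (S := comp dC (g a0)). apply rev_arc; auto.
    intros s Hs. apply comp_trans with (g a0); auto. apply BS; lra. }
  destruct (concat_arc Hr Hm) as [ga [Hga Himg]].
  { intros y Hy1 Hy2. destruct Hy1 as [t [Ht E]]. destruct Hy2 as [s [Hs E']].
    rewrite <- E. apply Hin with (al s). lra. congruence. }
  destruct (proj2 (Himg (g a0))) as [t [Ht E]]. right; exists 0; split; [lra|]. destruct Hal as [A0 _]; congruence.
  destruct (arc_additive HC Hga Ht) as [L [s [D1 [D2 [D3 Hs]]]]].
  rewrite E in D2, D3. rewrite Hg in D3. rewrite D1, D2, D3. simpl. f_equal. ring.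
Qed.

Lemma gate_exists c : (exists a0, comp dC c (g a0)) -> exists p, gate c p.
Proof.
  intros [a0 Ha0].
  destruct (classic (exists a, c = g a)) as [[a Ea]|NA].
  { subst c. exists a. split. apply comp_refl; auto. intros a'. rewrite (d_refl HmC), Hg. crunch. }
  assert (N : g a0 <> c) by (intro E; apply NA; exists a0; auto).
  destruct (arc_exists HC (comp_sym HmC _ _ Ha0) N) as [be Hbe].
  pose proof Hbe as [B0 [B1 [BS [Bi Bc]]]].
  set (K := fun s => 0 <= s <= 1 /\ exists a, be s = g a).
  assert (HB : bound K) by (exists 1; intros x [Hx _]; lra).
  assert (HK : exists x, K x) by (exists 0; split; [lra|]; exists a0; auto).
  destruct (completeness K HB HK) as [s0 [Hub Hlub]].
  assert (H0 : 0 <= s0) by (apply Hub; split; [lra|]; exists a0; auto).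
  assert (H1 : s0 <= 1) by (apply Hlub; intros x [Hx _]; lra).
  assert (Hs0 : exists a, be s0 = g a).
  { apply closedA. intros eps He. destruct (Bc s0 ltac:(lra) eps He) as [del [Hd Hdd]].
    destruct (classic (exists s, K s /\ s0 - del < s)) as [[s [[Hs [a Ea]] Hs2]]|NS].
    - exists a. rewrite <- Ea, (d_sym HmC). apply Hdd; auto. assert (s <= s0) by (apply Hub; split; eauto).
      apply Rabs_def1; lra.
    - exfalso. assert (s0 <= s0 - del); [|lra]. apply Hlub. intros x Hx. destruct (Rle_dec x (s0 - del)); auto.
      exfalso; apply NS; exists x; split; auto; lra. }
  destruct Hs0 as [as0 Eas0].
  assert (Hlt : s0 < 1) by (destruct H1; auto; subst s0; exfalso; apply NA; exists as0; congruence).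
  exists as0. apply gate_lemma with (be := fun t => be (s0 + t * (1 - s0))).
  - rewrite <- Eas0. apply arc_S with (S := comp dC (g a0)).
    + assert (Hs := sub_arc Hbe H0 Hlt (Rle_refl 1)). rewrite B1 in Hs. exact Hs.
    + intros t Ht. apply comp_trans with (g a0); auto; [apply comp_sym; auto; apply BS; lra | apply BS; nra].
  - intros t Ht a Ea. assert (s0 + t * (1 - s0) <= s0) by (apply Hub; split; [nra|]; exists a; auto).
    assert (t * (1 - s0) = 0) by nra. rewrite H2, Rplus_0_r. auto.
Qed.

Lemma gate_unique c p q : gate c p -> gate c q -> p = q.
Proof.
  intros [Cp Hp] [Cq Hq]. apply (d_eq0 HmA).
  specialize (Hp q). specialize (Hq p). rewrite (d_sym HmA q p) in Hq. unfold comp in *.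
  rewrite Hq in Hp. crunch.
Qed.

Lemma gate_seg c p y : gate c p -> Rbar_plus (dC (g p) y) (dC y c) = dC (g p) c -> gate y p.
Proof.
  intros [Cp Hp] Hs.
  assert (Cy : comp dC y (g p)).
  { unfold comp in *. rewrite (d_sym HmC y), (d_sym HmC c) in *. rewrite <- Hs in Cp. crunch. }
  split; auto. intros a.
  assert (T1 := d_tri HmC y (g p) (g a)). assert (T2 := d_tri HmC c y (g a)).
  specialize (Hp a). rewrite Hg in T1.
  rewrite (d_sym HmC (g p) y), (d_sym HmC (g p) c), (d_sym HmC y c) in Hs.
  unfold comp in *. rewrite Hp in T2. apply Rbar_le_antisym; auto. rewrite <- Hs in T2. crunch.
Qed.

End Gate.

Lemma inv_le K k : (0 < K)%nat -> (K <= k)%nat -> / INR (S k) <= / INR K.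
Proof. intros. apply Rinv_le_contravar. apply lt_0_INR; lia. apply le_INR; lia. Qed.
Lemma inv_pos k : 0 < / INR (S k).
Proof. apply Rinv_0_lt_compat, lt_0_INR; lia. Qed.

Section CompGen.
Variables X Y : Type.
Variable d : X -> X -> Rbar.
Variable e : Y -> Y -> Rbar.
Hypothesis Hd : ext_metric d.
Hypothesis He : ext_metric e.
Let nnd x y : Rbar_le (Finite 0) (d x y) := d_nn Hd x y.
Let nne x y : Rbar_le (Finite 0) (e x y) := d_nn He x y.
Local Hint Resolve nnd nne : rbnn.

Lemma comp_complete x : complete_in e (fun _ => True) -> complete_in e (comp e x).
Proof.
  intros Hc u Hu Hcau. destruct (Hc u (fun _ => I) Hcau) as [z [_ Hz]].
  exists z; split; auto. destruct (Hz 1 ltac:(lra)) as [N HN]. specialize (HN N (le_n N)).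
  apply comp_trans with (u N); auto. unfold comp. crunch.
Qed.

Hypothesis Hc : complete_in d (fun _ => True).
Variable i : X -> Y.
Hypothesis Hi : forall x y, e (i x) (i y) = d x y.

Lemma approx_complete (u : nat -> Y) : cauchy_seq e u ->
  (forall eps, 0 < eps -> exists N, forall n, (N <= n)%nat -> exists y, Rbar_lt (e (u n) (i y)) (Finite eps)) ->
  exists z, converges_to e u z.
Proof.
  intros Hcau Hap.
  assert (H2 : forall eps, 0 < eps -> exists N y, forall n, (N <= n)%nat -> Rbar_lt (e (u n) (i y)) (Finite eps)).
  { intros eps Heps. destruct (Hap (eps/2) ltac:(lra)) as [N1 HN1]. destruct (Hcau (eps/2) ltac:(lra)) as [M HM].
    destruct (HN1 (max N1 M) ltac:(lia)) as [y Hy]. exists (max N1 M), y. intros n Hn.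
    specialize (HM n (max N1 M) ltac:(lia) ltac:(lia)).
    assert (T := d_tri He (u n) (u (max N1 M)) (i y)). crunch. }
  assert (Hk : forall k : nat, exists p : nat * X, forall n, (fst p <= n)%nat -> Rbar_lt (e (u n) (i (snd p))) (Finite (/ INR (S k)))).
  { intros k. destruct (H2 _ (inv_pos k)) as [N [y Hy]]. exists (N, y); auto. }
  set (pk := fun k => proj1_sig (constructive_indefinite_description _ (Hk k))).
  assert (Pk : forall k n, (fst (pk k) <= n)%nat -> Rbar_lt (e (u n) (i (snd (pk k)))) (Finite (/ INR (S k)))).
  { intros k; unfold pk; destruct constructive_indefinite_description; auto. }
  set (yk := fun k => snd (pk k)).
  assert (Hy : cauchy_seq d yk).
  { intros eps Heps. destruct (archimed_cor1 (eps / 2)) as [K [HK HK0]]. lra.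
    exists K. intros m n Hm Hn. unfold yk. rewrite <- Hi.
    set (q := max (fst (pk m)) (fst (pk n))).
    assert (A1 := Pk m q ltac:(lia)). assert (A2 := Pk n q ltac:(lia)).
    assert (T := d_tri He (i (snd (pk m))) (u q) (i (snd (pk n)))). rewrite (d_sym He _ (u q)) in T.
    assert (B1 := inv_le HK0 Hm). assert (B2 := inv_le HK0 Hn). crunch. }
  destruct (Hc (u := yk) (fun _ => I) Hy) as [y [_ Hyl]].
  exists (i y). intros eps Heps.
  destruct (archimed_cor1 (eps / 2)) as [K [HK HK0]]. lra.
  destruct (Hyl (eps/2) ltac:(lra)) as [N2 HN2].
  set (k := max K N2). specialize (HN2 k ltac:(lia)).
  exists (fst (pk k)). intros n Hn. assert (A := Pk k n Hn).
  assert (T := d_tri He (u n) (i (yk k)) (i y)). rewrite Hi in T.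
  assert (B := inv_le HK0 (Nat.le_max_l K N2 : (K <= k)%nat)). unfold yk in *. crunch.
Qed.

End CompGen.

Section Glue.
Variables XA XB XC : Type.
Variable dA : XA -> XA -> Rbar.
Variable dB : XB -> XB -> Rbar.
Variable dC : XC -> XC -> Rbar.
Hypothesis HA : is_Rforest dA.
Hypothesis HB : is_Rforest dB.
Hypothesis HC : is_Rforest dC.
Let HmA : ext_metric dA := proj1 HA.
Let HmB : ext_metric dB := proj1 HB.
Let HmC : ext_metric dC := proj1 HC.
Let nnA x y : Rbar_le (Finite 0) (dA x y) := d_nn HmA x y.
Let nnB x y : Rbar_le (Finite 0) (dB x y) := d_nn HmB x y.
Let nnC x y : Rbar_le (Finite 0) (dC x y) := d_nn HmC x y.
Variable f : XA -> XB.
Variable g : XA -> XC.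
Hypothesis Hf : forall x y, dB (f x) (f y) = dA x y.
Hypothesis Hg : forall x y, dC (g x) (g y) = dA x y.
Variable D : Type.
Variable dD : D -> D -> Rbar.
Hypothesis HD : ext_metric dD.
Let nnD x y : Rbar_le (Finite 0) (dD x y) := d_nn HD x y.
Local Hint Resolve nnA nnB nnC nnD : rbnn.
Variable iB : XB -> D.
Variable iC : XC -> D.
Hypothesis HiB : forall x y, dD (iB x) (iB y) = dB x y.
Hypothesis HiC : forall x y, dD (iC x) (iC y) = dC x y.
Hypothesis Hcov : forall z, (exists b, z = iB b) \/ (exists c, z = iC c).
Hypothesis Hglue1 : forall a, iB (f a) = iC (g a).
Hypothesis Hglue2 : forall b c, iB b = iC c -> exists a, b = f a /\ c = g a.
Hypothesis Hcr1 : forall b c a, Rbar_le (dD (iB b) (iC c)) (Rbar_plus (dB b (f a)) (dC (g a) c)).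
Hypothesis Hcr2 : forall b c, Rbar_lt (dD (iB b) (iC c)) p_infty ->
  exists a, dD (iB b) (iC c) = Rbar_plus (dB b (f a)) (dC (g a) c).

Definition inB z := exists b, z = iB b.

Lemma cross_gate b c p : gate dA dC g c p -> dD (iB b) (iC c) = Rbar_plus (dB b (f p)) (dC (g p) c).
Proof.
  intros [Cp Hp]. apply Rbar_le_antisym; auto.
  destruct (classic (Rbar_lt (dD (iB b) (iC c)) p_infty)) as [Fin|Inf].
  - destruct (Hcr2 _ _ Fin) as [a Ea]. rewrite Ea. specialize (Hp a).
    assert (T := d_tri HmB b (f a) (f p)). rewrite Hf in T.
    assert (S1 := d_sym HmA p a). assert (S2 := d_sym HmC c (g p)). assert (S3 := d_sym HmC c (g a)).
    unfold comp in Cp. crunch.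
  - generalize (nnD (iB b) (iC c)). destruct (dD (iB b) (iC c)); simpl in *; try tauto.
    intros; destruct (Rbar_plus (dB b (f p)) (dC (g p) c)); simpl; auto.
Qed.

Lemma cross_nogate b c : ~ (exists a, comp dC c (g a)) -> dD (iB b) (iC c) = p_infty.
Proof.
  intros N. destruct (classic (Rbar_lt (dD (iB b) (iC c)) p_infty)) as [Fin|Inf].
  - exfalso. destruct (Hcr2 _ _ Fin) as [a Ea]. apply N. exists a. unfold comp in *. rewrite Ea in Fin.
    rewrite (d_sym HmC). crunch.
  - generalize (nnD (iB b) (iC c)). destruct (dD (iB b) (iC c)); simpl in *; tauto.
Qed.

Lemma sideC_open c : ~ (exists a, c = g a) -> exists eps, 0 < eps /\ forall b, Rbar_le (Finite eps) (dD (iB b) (iC c)).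
Proof.
  intros NA. destruct (classic (exists a, comp dC c (g a))) as [Ex|NEx].
  - destruct (gate_exists HA HC g Hg c Ex) as [p Hp].
    pose proof Hp as [Cp _]. destruct (comp_fin HmC _ _ Cp) as [r [Er Hr]].
    assert (0 < r) by (apply (neq_dpos HmC) with c (g p); auto; intro; apply NA; eauto).
    exists r. split; auto. intros b. rewrite (cross_gate b Hp). rewrite (d_sym HmC), Er. crunch.
  - exists 1. split; [lra|]. intros b. rewrite cross_nogate; simpl; auto.
Qed.

Lemma limit_A b : (forall eps, 0 < eps -> exists c, Rbar_lt (dD (iB b) (iC c)) (Finite eps)) -> exists a, b = f a.
Proof.
  intros H. apply (closedA HA HB f Hf). intros eps He. destruct (H eps He) as [c Hc].
  assert (Fin : Rbar_lt (dD (iB b) (iC c)) p_infty) by (crunch).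
  destruct (Hcr2 _ _ Fin) as [a Ea]. exists a. rewrite Ea in Hc. crunch.
Qed.

Lemma notB_C z : ~ inB z -> exists c, z = iC c /\ ~ (exists a, c = g a).
Proof.
  intros N. destruct (Hcov z) as [[b E]|[c E]]. exfalso; apply N; exists b; auto.
  exists c; split; auto. intros [a Ea]. apply N. exists (f a). rewrite Hglue1. congruence.
Qed.

Lemma left_exc x u v ga t0 : is_arc_in dD (comp dD x) u v ga -> inB (ga 0) -> 0 <= t0 <= 1 -> ~ inB (ga t0) ->
  exists s1 a1, 0 <= s1 < t0 /\ ga s1 = iB (f a1) /\ forall s, s1 < s <= t0 -> ~ inB (ga s).
Proof.
  intros Hga H0 Ht0 Nt0. pose proof Hga as [G0 [G1 [GS [Gi Gc]]]].
  set (E := fun s => 0 <= s <= t0 /\ inB (ga s)).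
  assert (HBd : bound E) by (exists t0; intros y [Hy _]; lra).
  assert (HE : exists y, E y) by (exists 0; split; [lra|auto]).
  destruct (completeness E HBd HE) as [s1 [Hub Hlub]].
  assert (A0 : 0 <= s1) by (apply Hub; split; [lra|auto]).
  assert (A1 : s1 <= t0) by (apply Hlub; intros y [Hy _]; lra).
  assert (Hin : inB (ga s1)).
  { apply NNPP; intros N. destruct (notB_C N) as [c [Ec NAc]].
    destruct (sideC_open NAc) as [eps [He Heps]].
    destruct (Gc s1 ltac:(lra) eps He) as [del [Hd Hdd]].
    destruct (classic (exists s, E s /\ s1 - del < s)) as [[s [[Hs [b Eb]] Hs2]]|NS].
    - assert (s <= s1) by (apply Hub; split; [auto|exists b; auto]).
      specialize (Hdd s ltac:(lra) ltac:(apply Rabs_def1; lra)). rewrite Eb, Ec in Hdd.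
      specialize (Heps b). crunch.
    - assert (s1 <= s1 - del); [|lra]. apply Hlub. intros y Hy. destruct (Rle_dec y (s1 - del)); auto.
      exfalso; apply NS; exists y; split; auto; lra. }
  assert (Hlt : s1 < t0) by (destruct A1; auto; subst; contradiction).
  assert (Hafter : forall s, s1 < s <= t0 -> ~ inB (ga s)).
  { intros s Hs Hb. assert (s <= s1) by (apply Hub; split; [lra|auto]). lra. }
  destruct Hin as [xb Exb].
  destruct (@limit_A xb) as [a1 Ea1].
  { intros eps He. destruct (Gc s1 ltac:(lra) eps He) as [del [Hd Hdd]].
    set (s := Rmin (s1 + del / 2) t0).
    assert (s1 < s) by (unfold s; apply Rmin_glb_lt; lra).
    assert (s <= t0) by (unfold s; apply Rmin_r). assert (s <= s1 + del/2) by (unfold s; apply Rmin_l).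
    destruct (notB_C (Hafter s ltac:(lra))) as [c [Ec _]]. exists c.
    specialize (Hdd s ltac:(lra) ltac:(apply Rabs_def1; lra)). rewrite Ec, Exb in Hdd. rewrite (d_sym HD). auto. }
  exists s1, a1. repeat split; auto. congruence.
Qed.

Lemma BB_inB x b b' ga : is_arc_in dD (comp dD x) (iB b) (iB b') ga -> forall t, 0 <= t <= 1 -> inB (ga t).
Proof.
  intros Hga t0 Ht0. apply NNPP; intros N0. pose proof Hga as [G0 [G1 [GS [Gi Gc]]]].
  destruct (left_exc Hga ltac:(exists b; auto) Ht0 N0) as [s1 [a1 [Hs1 [E1 Aft1]]]].
  assert (Hr := rev_arc Hga).
  destruct (@left_exc x (iB b') (iB b) (fun t => ga (1 - t)) (1 - t0) Hr) as [r1 [a2 [Hr1 [E2 Aft2]]]].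
  { exists b'. rewrite Rminus_0_r; auto. } lra. { replace (1 - (1 - t0)) with t0 by ring. auto. }
  set (s2 := 1 - r1). assert (Hs2 : t0 < s2 <= 1) by (unfold s2; lra).
  assert (E2' : ga s2 = iB (f a2)) by exact E2.
  assert (Int : forall s, s1 < s < s2 -> ~ inB (ga s)).
  { intros s Hs. destruct (Rle_dec s t0). apply Aft1; lra.
    assert (H := Aft2 (1 - s) ltac:(unfold s2 in *; lra)). replace (1 - (1 - s)) with s in H by ring. auto. }
  assert (Hsub := sub_arc Hga (proj1 Hs1) (ltac:(lra) : s1 < s2) (proj2 Hs2)).
  assert (HinC : forall t, 0 <= t <= 1 -> exists c, ga (s1 + t * (s2 - s1)) = iC c).
  { intros t Ht. destruct (Req_dec t 0) as [T0|T0].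
    - subst t. exists (g a1). rewrite Rmult_0_l, Rplus_0_r, E1; auto.
    - destruct (Req_dec t 1) as [T1|T1].
      + subst t. exists (g a2). replace (s1 + 1 * (s2 - s1)) with s2 by ring. rewrite E2'; auto.
      + destruct (notB_C (Int (s1 + t * (s2 - s1)) ltac:(nra))) as [c [Ec _]]. exists c; auto. }
  destruct (arc_pull dC iC HiC Hsub HinC) as [be [Hbe Hbarc]].
  assert (B0 : be 0 = g a1).
  { apply (iso_inj HmC HD iC HiC). rewrite <- Hbe by lra. rewrite Rmult_0_l, Rplus_0_r, E1; auto. }
  assert (B1 : be 1 = g a2).
  { apply (iso_inj HmC HD iC HiC). rewrite <- Hbe by lra. replace (s1 + 1 * (s2 - s1)) with s2 by ring. rewrite E2'; auto. }
  rewrite B0, B1 in Hbarc.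
  assert (Hbc : is_arc_in dC (comp dC (g a1)) (g a1) (g a2) be).
  { apply arc_S with (S := fun _ => True); auto. intros t Ht. unfold comp. rewrite <- HiC, <- Hglue1, <- E1, <- Hbe by auto.
    fold (comp dD (ga s1) (ga (s1 + t * (s2 - s1)))). apply comp_trans with x; auto.
    apply comp_sym; auto; apply GS; lra. apply GS; nra. }
  destruct (convexA HA HC g Hg _ _ Hbc (t := (t0 - s1) / (s2 - s1))) as [a Ea].
  { split. apply Rmult_le_pos; [lra|apply Rlt_le, Rinv_0_lt_compat; lra].
    apply Rmult_le_reg_r with (s2 - s1). lra. unfold Rdiv; rewrite Rmult_assoc, Rinv_l; lra. }
  apply N0. exists (f a). rewrite Hglue1, <- Ea, <- Hbe.
  f_equal; field; lra.
  split. apply Rmult_le_pos; [lra|apply Rlt_le, Rinv_0_lt_compat; lra].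
  apply Rmult_le_reg_r with (s2 - s1). lra. unfold Rdiv; rewrite Rmult_assoc, Rinv_l; lra.
Qed.

Lemma BB_img x b b' ga : is_arc_in dD (comp dD x) (iB b) (iB b') ga ->
  exists be, is_arc_in dB (comp dB b) b b' be /\ forall z, arc_image ga z <-> exists y, z = iB y /\ arc_image be y.
Proof.
  intros Hga. pose proof Hga as [G0 [G1 [GS [Gi Gc]]]].
  destruct (arc_pull dB iB HiB Hga (BB_inB Hga)) as [be [Hbe Hbarc]].
  assert (B0 : be 0 = b) by (apply (iso_inj HmB HD iB HiB); rewrite <- Hbe by lra; auto).
  assert (B1 : be 1 = b') by (apply (iso_inj HmB HD iB HiB); rewrite <- Hbe by lra; auto).
  rewrite B0, B1 in Hbarc. exists be. split.
  - apply arc_S with (S := fun _ => True); auto. intros t Ht. unfold comp. rewrite <- HiB, <- B0, <- !Hbe by lra.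
    fold (comp dD (ga 0) (ga t)). apply comp_trans with x; auto. apply comp_sym; auto; apply GS; lra.
  - intros z. rewrite (arc_image_ext _ _ z Hbe). apply arc_map_img.
Qed.

Lemma mixed_arc x b c ga : is_arc_in dD (comp dD x) (iB b) (iC c) ga ->
  ~ (exists a, b = f a) -> ~ (exists a, c = g a) ->
  exists p be1 be2, gate dA dC g c p /\ is_arc_in dB (comp dB b) b (f p) be1 /\
    is_arc_in dC (comp dC (g p)) (g p) c be2 /\
    forall z, arc_image ga z <-> (exists y, z = iB y /\ arc_image be1 y) \/ (exists y, z = iC y /\ arc_image be2 y).
Proof.
  intros Hga NB NC. pose proof Hga as [G0 [G1 [GS [Gi Gc]]]].
  assert (N1 : ~ inB (ga 1)).
  { rewrite G1. intros [y Ey]. destruct (Hglue2 (eq_sym Ey)) as [a [_ Ea]]. apply NC; eauto. }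
  destruct (left_exc (t0 := 1) Hga ltac:(exists b; auto) ltac:(lra) N1) as [s1 [a1 [Hs1 [E1 Aft1]]]].
  assert (Hs1p : 0 < s1).
  { destruct (proj1 Hs1) as [H|H]; auto. subst s1. rewrite G0 in E1. apply (iso_inj HmB HD iB HiB) in E1. exfalso; apply NB; eauto. }
  assert (Hsub1 := sub_arc Hga (Rle_refl 0) Hs1p ltac:(lra)).
  rewrite G0, E1 in Hsub1.
  destruct (BB_img Hsub1) as [be1 [Hbe1 Himg1]].
  assert (Hsub2 := sub_arc Hga (proj1 Hs1) (proj2 Hs1) (Rle_refl 1)).
  assert (HinC : forall t, 0 <= t <= 1 -> exists c, ga (s1 + t * (1 - s1)) = iC c).
  { intros t Ht. destruct (Req_dec t 0) as [T0|T0].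
    - subst t. exists (g a1). rewrite Rmult_0_l, Rplus_0_r, E1; auto.
    - destruct (notB_C (Aft1 (s1 + t * (1 - s1)) ltac:(nra))) as [c' [Ec _]]. exists c'; auto. }
  destruct (arc_pull dC iC HiC Hsub2 HinC) as [be2 [Hbe2 Hbarc]].
  assert (B0 : be2 0 = g a1).
  { apply (iso_inj HmC HD iC HiC). rewrite <- Hbe2 by lra. rewrite Rmult_0_l, Rplus_0_r, E1; auto. }
  assert (B1 : be2 1 = c).
  { apply (iso_inj HmC HD iC HiC). rewrite <- Hbe2 by lra. replace (s1 + 1 * (1 - s1)) with 1 by ring. auto. }
  rewrite B0, B1 in Hbarc.
  assert (Hbc : is_arc_in dC (comp dC (g a1)) (g a1) c be2).
  { apply arc_S with (S := fun _ => True); auto. intros t Ht. unfold comp. rewrite <- HiC, <- Hglue1, <- E1, <- Hbe2 by auto.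
    fold (comp dD (ga s1) (ga (s1 + t * (1 - s1)))). apply comp_trans with x; auto.
    apply comp_sym; auto; apply GS; lra. apply GS; nra. }
  assert (Hgate : gate dA dC g c a1).
  { apply gate_lemma with (be := be2); auto. intros t Ht a Ea.
    destruct (Req_dec t 0) as [T0|T0]. subst t; auto.
    exfalso. apply (Aft1 (s1 + t * (1 - s1))). nra. exists (f a). rewrite Hglue1, <- Ea. apply Hbe2; auto. }
  exists a1, be1, be2. split; auto. split; auto. split; auto.
  intros z. split.
  - intros [t [Ht Ez]]. destruct (Rle_dec t s1).
    + left. apply Himg1. apply (sub_arc_img ga (s1:=0) (s2:=s1) z); try lra. exists t; split; [lra|auto].
    + right. assert (Hz : arc_image (fun t => ga (s1 + t * (1 - s1))) z).
      { apply (sub_arc_img ga (s1:=s1) (s2:=1) z); try lra. exists t; split; [lra|auto]. }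
      rewrite (arc_image_ext _ _ z Hbe2) in Hz. apply (proj1 (arc_map_img iC be2 z)) in Hz. auto.
  - intros [Hz|Hz].
    + apply Himg1 in Hz. apply (sub_arc_img ga (s1:=0) (s2:=s1) z) in Hz; try lra.
      destruct Hz as [t [Ht Ez]]. exists t; split; [lra|auto].
    + destruct Hz as [y [Ey [t [Ht Et]]]]. exists (s1 + t * (1 - s1)). split. nra.
      rewrite Hbe2 by auto. congruence.
Qed.

Lemma mixed_param b c p : gate dA dC g c p -> comp dB b (f p) ->
  exists L phi, 0 <= L /\ dD (iB b) (iC c) = Finite L /\ isom_on dD L phi /\ phi 0 = iB b /\ phi L = iC c /\
    (forall s, 0 <= s <= L -> comp dD (iB b) (phi s)) /\
    forall be1 be2, is_arc_in dB (comp dB b) b (f p) be1 -> is_arc_in dC (comp dC (g p)) (g p) c be2 ->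
      forall z, ((exists y, z = iB y /\ arc_image be1 y) \/ (exists y, z = iC y /\ arc_image be2 y)) <->
                exists s, 0 <= s <= L /\ phi s = z.
Proof.
  intros Hgate Hbp. pose proof Hgate as [Cp _].
  destruct (geo_param HB b (f p) Hbp) as [L1 [ps1 [HL1 [D1 [P10 [P1L [Pi1 [Pc1 Pimg1]]]]]]]].
  assert (Hpc : comp dC (g p) c) by (apply comp_sym; auto).
  destruct (geo_param HC (g p) c Hpc) as [L2 [ps2 [HL2 [D2 [P20 [P2L [Pi2 [Pc2 Pimg2]]]]]]]].
  set (phi := fun s => if Rle_dec s L1 then iB (ps1 s) else iC (ps2 (s - L1))).
  assert (Pa : forall s, s <= L1 -> phi s = iB (ps1 s)) by (intros; unfold phi; destruct Rle_dec; auto; lra).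
  assert (Pb : forall s, L1 < s -> phi s = iC (ps2 (s - L1))) by (intros; unfold phi; destruct Rle_dec; auto; lra).
  assert (Habs : forall u v, Rabs (u - v) = Rabs (v - u)) by (intros; apply Rabs_minus_sym).
  assert (Gt : forall t, 0 <= t <= L2 -> gate dA dC g (ps2 t) p).
  { intros t Ht. apply (gate_seg HA HC Hg (c := c)); auto. rewrite <- P20, <- P2L at 1. rewrite <- P2L.
    rewrite !Pi2 by lra. rewrite <- P20. rewrite Pi2 by lra. simpl. f_equal.
    unfold Rabs; repeat destruct Rcase_abs; lra. }
  assert (Cr : forall s t, 0 <= s <= L1 -> 0 <= t <= L2 -> dD (iB (ps1 s)) (iC (ps2 t)) = Finite (L1 - s + t)).
  { intros s t Hs Ht. rewrite (cross_gate (ps1 s) (Gt t Ht)). rewrite <- P1L at 1. rewrite <- P20 at 1.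
    rewrite Pi1, Pi2 by lra. simpl. f_equal. unfold Rabs; repeat destruct Rcase_abs; lra. }
  exists (L1 + L2), phi. split; [lra|]. split.
  { rewrite <- P10, <- P2L, Cr by lra. f_equal; ring. }
  assert (Iso : isom_on dD (L1 + L2) phi).
  { intros s t Hs Ht. destruct (Rle_dec s L1); destruct (Rle_dec t L1).
    - rewrite Pa, Pa, HiB, Pi1 by lra; auto.
    - rewrite Pa, Pb, Cr by lra. f_equal. unfold Rabs; repeat destruct Rcase_abs; lra.
    - rewrite Pb, Pa, (d_sym HD), Cr by lra. f_equal. unfold Rabs; repeat destruct Rcase_abs; lra.
    - rewrite Pb, Pb, HiC, Pi2 by lra. f_equal. f_equal. ring. }
  split; auto. split; [rewrite Pa, P10 by lra; auto|]. split.
  { destruct (Req_dec L2 0) as [Z|Z].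
    - rewrite Z, Rplus_0_r, Pa, P1L, Hglue1 by lra. rewrite <- P2L, Z, P20. auto.
    - rewrite Pb, <- P2L by lra. f_equal; f_equal; ring. }
  split.
  { intros s Hs. unfold comp. rewrite <- P10, <- Pa by lra. rewrite Iso by lra. simpl; auto. }
  intros be1 be2 Hbe1 Hbe2 z. split.
  - intros [[y [Ey Hy]]|[y [Ey Hy]]].
    + apply (Pimg1 be1 Hbe1) in Hy. destruct Hy as [s [Hs Es]]. exists s. split. lra. rewrite Pa by lra. congruence.
    + apply (Pimg2 be2 Hbe2) in Hy. destruct Hy as [t [Ht Et]]. destruct (Req_dec t 0) as [Z|Z].
      * exists L1. split. lra. rewrite Pa, P1L, Hglue1 by lra. rewrite <- P20, <- Z. congruence.
      * exists (L1 + t). split. lra. rewrite Pb by lra. replace (L1 + t - L1) with t by ring. congruence.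
  - intros [s [Hs Es]]. destruct (Rle_dec s L1).
    + left. exists (ps1 s). split. rewrite <- Es, Pa; auto. apply (Pimg1 be1 Hbe1). exists s; split; auto; lra.
    + right. exists (ps2 (s - L1)). split. rewrite <- Es, Pb; auto; lra. apply (Pimg2 be2 Hbe2). exists (s - L1); split; auto; lra.
Qed.

Definition inC z := exists c, z = iC c.

Lemma D_complete : complete_in dD (fun _ => True).
Proof.
  intros u _ Hcau.
  destruct (classic (exists N, forall n, (N <= n)%nat -> inB (u n))) as [[N HN]|NBs].
  { destruct (approx_complete HmB HD (f_complete HB) iB HiB Hcau) as [z Hz].
    - intros eps He. exists N. intros n Hn. destruct (HN n Hn) as [b Eb]. exists b. rewrite Eb, HiB, (d_refl HmB). simpl; auto.
    - exists z; split; auto. }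
  destruct (classic (exists N, forall n, (N <= n)%nat -> inC (u n))) as [[N HN]|NCs].
  { destruct (approx_complete HmC HD (f_complete HC) iC HiC Hcau) as [z Hz].
    - intros eps He. exists N. intros n Hn. destruct (HN n Hn) as [b Eb]. exists b. rewrite Eb, HiC, (d_refl HmC). simpl; auto.
    - exists z; split; auto. }
  assert (HiA : forall x y, dD (iB (f x)) (iB (f y)) = dA x y) by (intros; rewrite HiB; auto).
  destruct (approx_complete HmA HD (f_complete HA) (fun a => iB (f a)) HiA Hcau) as [z Hz].
  2:{ exists z; split; auto. }
  intros eps He. destruct (Hcau eps He) as [N HN]. exists N. intros n Hn.
  destruct (Hcov (u n)) as [[b Eb]|[c Ec]].
  - assert (exists m, (N <= m)%nat /\ ~ inB (u m)) as [m [Hm Nm]].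
    { apply NNPP; intros H. apply NBs. exists N. intros k Hk. apply NNPP; intros H'. apply H; eauto. }
    destruct (notB_C Nm) as [c [Ec _]]. specialize (HN n m Hn Hm). rewrite Eb, Ec in HN.
    assert (Fin : Rbar_lt (dD (iB b) (iC c)) p_infty) by crunch.
    destruct (Hcr2 _ _ Fin) as [a Ea]. exists a. rewrite Eb, HiB. rewrite Ea in HN. crunch.
  - assert (exists m, (N <= m)%nat /\ ~ inC (u m)) as [m [Hm Nm]].
    { apply NNPP; intros H. apply NCs. exists N. intros k Hk. apply NNPP; intros H'. apply H; eauto. }
    destruct (Hcov (u m)) as [[b Eb]|[c' Ec']]; [| exfalso; apply Nm; exists c'; auto].
    specialize (HN n m Hn Hm). rewrite Eb, Ec, (d_sym HD) in HN.
    assert (Fin : Rbar_lt (dD (iB b) (iC c)) p_infty) by crunch.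
    destruct (Hcr2 _ _ Fin) as [a Ea]. exists a. rewrite Ec, Hglue1, HiC. rewrite Ea in HN.
    assert (S1 := d_sym HmC c (g a)). crunch.
Qed.

Lemma BB_exist x b b' : comp dD x (iB b) -> comp dD x (iB b') -> b <> b' ->
  exists ga, is_arc_in dD (comp dD x) (iB b) (iB b') ga.
Proof.
  intros C1 C2 N. assert (Cb : comp dB b b').
  { unfold comp. rewrite <- HiB. fold (comp dD (iB b) (iB b')). apply comp_trans with x; auto. apply comp_sym; auto. }
  destruct (arc_exists HB Cb N) as [be Hbe].
  exists (fun t => iB (be t)). apply (arc_map HmB HD iB HiB _ Hbe).
  intros t Ht. apply comp_trans with (iB b); auto. unfold comp. rewrite HiB. destruct Hbe as [_ [_ [HS _]]]. apply HS; auto.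
Qed.

Lemma BB_uniq x b b' g1 g2 : is_arc_in dD (comp dD x) (iB b) (iB b') g1 -> is_arc_in dD (comp dD x) (iB b) (iB b') g2 ->
  forall z, arc_image g1 z <-> arc_image g2 z.
Proof.
  intros H1 H2 z. destruct (BB_img H1) as [be1 [Hb1 I1]]. destruct (BB_img H2) as [be2 [Hb2 I2]].
  rewrite I1, I2. split; intros [y [Ey Hy]]; exists y; split; auto; eapply (arc_unique HB); eauto.
  apply (arc_unique HB Hb2 Hb1); auto.
Qed.

Lemma BB_iso x b b' ga : is_arc_in dD (comp dD x) (iB b) (iB b') ga -> isometric_to_interval dD (arc_image ga).
Proof.
  intros H. destruct (BB_img H) as [be [Hb I]].
  destruct (rtree HB b) as [_ [_ [_ [_ Hiso]]]].
  destruct (Hiso _ _ _ Hb) as [L [phi [HL [Himg Hph]]]].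
  exists L, (fun s => iB (phi s)). split; auto. split.
  - intros z. rewrite I. split.
    + intros [y [Ey Hy]]. apply Himg in Hy. destruct Hy as [s [Hs Es]]. exists s; split; auto; congruence.
    + intros [s [Hs Es]]. exists (phi s). split; auto. apply Himg. eauto.
  - intros s t Hs Ht. rewrite HiB; auto.
Qed.

Lemma BC_exist x b c : comp dD x (iB b) -> comp dD x (iC c) -> iB b <> iC c ->
  exists ga, is_arc_in dD (comp dD x) (iB b) (iC c) ga.
Proof.
  intros C1 C2 N. assert (Cbc : comp dD (iB b) (iC c)) by (apply comp_trans with x; auto; apply comp_sym; auto).
  destruct (Hcr2 _ _ Cbc) as [a Ea].
  assert (Ex : exists a, comp dC c (g a)).
  { exists a. unfold comp in *. rewrite Ea in Cbc. rewrite (d_sym HmC). crunch. }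
  destruct (gate_exists HA HC g Hg c Ex) as [p Hp].
  assert (Cbp : comp dB b (f p)).
  { unfold comp in *. rewrite (cross_gate b Hp) in Cbc. crunch. }
  destruct (mixed_param b Hp Cbp) as [L [phi [HL [DL [Iso [P0 [PL [Pc _]]]]]]]].
  assert (HL' : 0 < L) by (apply (neq_dpos HD) with (iB b) (iC c); auto).
  exists (fun t => phi (t * L)). rewrite <- P0, <- PL. apply (isom_arc HD); auto.
  intros s Hs. apply comp_trans with (iB b); auto.
Qed.

Lemma BC_img x b c ga : is_arc_in dD (comp dD x) (iB b) (iC c) ga ->
  ~ (exists a, b = f a) -> ~ (exists a, c = g a) ->
  exists p L phi, gate dA dC g c p /\ isom_on dD L phi /\ 0 <= L /\ forall z, arc_image ga z <-> exists s, 0 <= s <= L /\ phi s = z.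
Proof.
  intros H NB NC. destruct (mixed_arc H NB NC) as [p [be1 [be2 [Hp [Hb1 [Hb2 Himg]]]]]].
  assert (Cbp : comp dB b (f p)) by (destruct Hb1 as [_ [B1 [BS _]]]; rewrite <- B1; apply BS; lra).
  destruct (mixed_param b Hp Cbp) as [L [phi [HL [DL [Iso [P0 [PL [Pc Pimg]]]]]]]].
  exists p, L, phi. split; auto. split; auto. split; auto. intros z. rewrite Himg. apply Pimg; auto.
Qed.

Lemma BC_uniq x b c g1 g2 : is_arc_in dD (comp dD x) (iB b) (iC c) g1 -> is_arc_in dD (comp dD x) (iB b) (iC c) g2 ->
  ~ (exists a, b = f a) -> ~ (exists a, c = g a) ->
  forall z, arc_image g1 z <-> arc_image g2 z.
Proof.
  intros H1 H2 NB NC. destruct (mixed_arc H1 NB NC) as [p [be1 [be2 [Hp [Hb1 [Hb2 Himg]]]]]].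
  destruct (mixed_arc H2 NB NC) as [q [be1' [be2' [Hq [Hb1' [Hb2' Himg']]]]]].
  assert (p = q) by (apply (gate_unique HA HC Hp Hq)). subst q.
  assert (Cbp : comp dB b (f p)) by (destruct Hb1 as [_ [B1 [BS _]]]; rewrite <- B1; apply BS; lra).
  destruct (mixed_param b Hp Cbp) as [L [phi [HL [DL [Iso [P0 [PL [Pc Pimg]]]]]]]].
  intros z. rewrite Himg, Himg', (Pimg be1 be2 Hb1 Hb2), (Pimg be1' be2' Hb1' Hb2'). tauto.
Qed.

Lemma BC_iso x b c ga : is_arc_in dD (comp dD x) (iB b) (iC c) ga ->
  ~ (exists a, b = f a) -> ~ (exists a, c = g a) -> isometric_to_interval dD (arc_image ga).
Proof.
  intros H NB NC. destruct (BC_img H NB NC) as [p [L [phi [_ [Iso [HL Himg]]]]]].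
  exists L, phi. auto.
Qed.

End Glue.

Lemma iti_ext X (d : X -> X -> Rbar) (A B : X -> Prop) : (forall y, A y <-> B y) ->
  isometric_to_interval d A -> isometric_to_interval d B.
Proof. intros H [L [f [HL [Hi Hf]]]]. exists L, f. split; auto. split; auto. intros y; rewrite <- H; auto. Qed.

Section GlueFinal.
Variables XA XB XC : Type.
Variable dA : XA -> XA -> Rbar.
Variable dB : XB -> XB -> Rbar.
Variable dC : XC -> XC -> Rbar.
Hypothesis HA : is_Rforest dA.
Hypothesis HB : is_Rforest dB.
Hypothesis HC : is_Rforest dC.
Variable f : XA -> XB.
Variable g : XA -> XC.
Hypothesis Hf : forall x y, dB (f x) (f y) = dA x y.
Hypothesis Hg : forall x y, dC (g x) (g y) = dA x y.
Variable D : Type.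
Variable dD : D -> D -> Rbar.
Hypothesis HD : ext_metric dD.
Variable iB : XB -> D.
Variable iC : XC -> D.
Hypothesis HiB : forall x y, dD (iB x) (iB y) = dB x y.
Hypothesis HiC : forall x y, dD (iC x) (iC y) = dC x y.
Hypothesis Hcov : forall z, (exists b, z = iB b) \/ (exists c, z = iC c).
Hypothesis Hglue1 : forall a, iB (f a) = iC (g a).
Hypothesis Hglue2 : forall b c, iB b = iC c -> exists a, b = f a /\ c = g a.
Hypothesis Hcr1 : forall b c a, Rbar_le (dD (iB b) (iC c)) (Rbar_plus (dB b (f a)) (dC (g a) c)).
Hypothesis Hcr2 : forall b c, Rbar_lt (dD (iB b) (iC c)) p_infty ->
  exists a, dD (iB b) (iC c) = Rbar_plus (dB b (f a)) (dC (g a) c).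

Let HmB : ext_metric dB := proj1 HB.
Let HmC : ext_metric dC := proj1 HC.

Let Hcov' : forall z, (exists c, z = iC c) \/ (exists b, z = iB b).
Proof. intros z; destruct (Hcov z); auto. Qed.
Let Hglue1' : forall a, iC (g a) = iB (f a).
Proof. intros; auto. Qed.
Let Hcr1' : forall c b a, Rbar_le (dD (iC c) (iB b)) (Rbar_plus (dC c (g a)) (dB (f a) b)).
Proof. intros. rewrite (d_sym HD), (d_sym HmC), (d_sym HmB), Rbar_plus_comm. auto. Qed.
Let Hcr2' : forall c b, Rbar_lt (dD (iC c) (iB b)) p_infty ->
  exists a, dD (iC c) (iB b) = Rbar_plus (dC c (g a)) (dB (f a) b).
Proof. intros c b H. rewrite (d_sym HD) in *. destruct (Hcr2 _ _ H) as [a Ea]. exists a.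
  rewrite Ea, (d_sym HmC), (d_sym HmB), Rbar_plus_comm. auto. Qed.

Let NB b := ~ (exists a, b = f a).
Let NC c := ~ (exists a, c = g a).

Lemma classify u v : (exists b b', u = iB b /\ v = iB b') \/ (exists c c', u = iC c /\ v = iC c') \/
  (exists b c, u = iB b /\ v = iC c /\ NB b /\ NC c) \/ (exists b c, u = iC c /\ v = iB b /\ NB b /\ NC c).
Proof.
  destruct (Hcov u) as [[b Eb]|[c Ec]]; destruct (Hcov v) as [[b' Eb']|[c' Ec']].
  - left; eauto.
  - destruct (classic (exists a, c' = g a)) as [[a Ea]|N2].
    { left. exists b, (f a). subst. rewrite Hglue1; auto. }
    destruct (classic (exists a, b = f a)) as [[a Ea]|N1].
    { right; left. exists (g a), c'. subst. rewrite Hglue1; auto. }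
    right; right; left. exists b, c'. auto.
  - destruct (classic (exists a, c = g a)) as [[a Ea]|N2].
    { left. exists (f a), b'. subst. rewrite Hglue1; auto. }
    destruct (classic (exists a, b' = f a)) as [[a Ea]|N1].
    { right; left. exists c, (g a). subst. rewrite Hglue1; auto. }
    right; right; right. exists b', c. auto.
  - right; left; eauto.
Qed.

Lemma D_rtree x : is_Rtree dD (comp dD x).
Proof.
  split; [|split; [|split; [|split]]].
  - intros y z Hy Hz. destruct (comp_fin HD y z (comp_trans HD _ _ _ (comp_sym HD _ _ Hy) Hz)) as [r [E _]]. eauto.
  - apply (comp_complete HD). apply (D_complete HA HB HC f g Hf HD iB iC HiB HiC Hcov Hglue1 Hcr2).
  - intros u v Hu Hv N.
    destruct (classify u v) as [[b [b' [E1 E2]]]|[[c [c' [E1 E2]]]|[[b [c [E1 [E2 _]]]]|[b [c [E1 [E2 _]]]]]]]; subst u v.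
    + apply (BB_exist HB HD iB HiB x Hu Hv). intro; subst; auto.
    + apply (BB_exist HC HD iC HiC x Hu Hv). intro; subst; auto.
    + apply (BC_exist HA HB HC f g Hf Hg HD iB iC HiB HiC Hglue1 Hcr1 Hcr2 x b c Hu Hv N).
    + destruct (BC_exist HA HB HC f g Hf Hg HD iB iC HiB HiC Hglue1 Hcr1 Hcr2 x b c Hv Hu (not_eq_sym N)) as [ga Hga].
      exists (fun t => ga (1 - t)). apply rev_arc; auto.
  - intros u v g1 g2 H1 H2 z.
    destruct (classify u v) as [[b [b' [E1 E2]]]|[[c [c' [E1 E2]]]|[[b [c [E1 [E2 [N1 N2]]]]]|[b [c [E1 [E2 [N1 N2]]]]]]]]; subst u v.
    + apply (BB_uniq HA HB HC f g Hf Hg HD iB iC HiB HiC Hcov Hglue1 Hcr1 Hcr2 b b' H1 H2).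
    + apply (BB_uniq HA HC HB g f Hg Hf HD iC iB HiC HiB Hcov' Hglue1' Hcr1' Hcr2' c c' H1 H2).
    + apply (BC_uniq HA HB HC f g Hf Hg HD iB iC HiB HiC Hcov Hglue1 Hglue2 Hcr1 Hcr2 H1 H2 N1 N2).
    + rewrite <- (rev_arc_img g1), <- (rev_arc_img g2).
      apply (BC_uniq HA HB HC f g Hf Hg HD iB iC HiB HiC Hcov Hglue1 Hglue2 Hcr1 Hcr2 (rev_arc H1) (rev_arc H2) N1 N2).
  - intros u v ga H.
    destruct (classify u v) as [[b [b' [E1 E2]]]|[[c [c' [E1 E2]]]|[[b [c [E1 [E2 [N1 N2]]]]]|[b [c [E1 [E2 [N1 N2]]]]]]]]; subst u v.
    + apply (BB_iso HA HB HC f g Hf Hg HD iB iC HiB HiC Hcov Hglue1 Hcr1 Hcr2 b b' H).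
    + apply (BB_iso HA HC HB g f Hg Hf HD iC iB HiC HiB Hcov' Hglue1' Hcr1' Hcr2' c c' H).
    + apply (BC_iso HA HB HC f g Hf Hg HD iB iC HiB HiC Hcov Hglue1 Hglue2 Hcr1 Hcr2 H N1 N2).
    + apply iti_ext with (A := arc_image (fun t => ga (1 - t))). apply rev_arc_img.
      apply (BC_iso HA HB HC f g Hf Hg HD iB iC HiB HiC Hcov Hglue1 Hglue2 Hcr1 Hcr2 (rev_arc H) N1 N2).
Qed.

Theorem glue_forest : is_Rforest dD.
Proof.
  split; auto. split. apply (D_complete HA HB HC f g Hf HD iB iC HiB HiC Hcov Hglue1 Hcr2).
  intros x. apply D_rtree.
Qed.

End GlueFinal.

Section Concrete.
Variables A B C : RFRmodel.
Variable f : A -> B.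
Variable g : A -> C.
Hypothesis Hf : embedding A B f.
Hypothesis Hg : embedding A C g.

Local Notation dA := (mdist A).
Local Notation dB := (mdist B).
Local Notation dC := (mdist C).
Let HA : is_Rforest dA := m_forest A.
Let HB : is_Rforest dB := m_forest B.
Let HC : is_Rforest dC := m_forest C.
Let HmA : ext_metric dA := proj1 HA.
Let HmB : ext_metric dB := proj1 HB.
Let HmC : ext_metric dC := proj1 HC.
Let nnA x y : Rbar_le (Finite 0) (dA x y) := d_nn HmA x y.
Let nnB x y : Rbar_le (Finite 0) (dB x y) := d_nn HmB x y.
Let nnC x y : Rbar_le (Finite 0) (dC x y) := d_nn HmC x y.
Local Hint Resolve nnA nnB nnC : rbnn.
Let Hfd : forall x y, dB (f x) (f y) = dA x y := proj1 Hf.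
Let Hgd : forall x y, dC (g x) (g y) = dA x y := proj1 Hg.

Let ginj a a' : g a = g a' -> a = a'.
Proof. apply (iso_inj HmA HmC g Hgd). Qed.

Definition DT := (B + {c : C | ~ exists a, c = g a})%type.

Definition cross (b : B) (c : C) : Rbar :=
  match excluded_middle_informative (exists p, gate dA dC g c p) with
  | left H => let p := proj1_sig (constructive_indefinite_description _ H) in Rbar_plus (dB b (f p)) (dC (g p) c)
  | right _ => p_infty
  end.

Definition dD (x y : DT) : Rbar :=
  match x, y with
  | inl b, inl b' => dB b b'
  | inr c, inr c' => dC (proj1_sig c) (proj1_sig c')
  | inl b, inr c => cross b (proj1_sig c)
  | inr c, inl b => cross b (proj1_sig c)
  end.

Definition iC (c : C) : DT :=
  match excluded_middle_informative (exists a, c = g a) with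
  | left H => inl (f (proj1_sig (constructive_indefinite_description _ H)))
  | right H => inr (exist _ c H)
  end.

Lemma iC_A a : iC (g a) = inl (f a).
Proof. unfold iC. destruct excluded_middle_informative as [H|H].
  - destruct constructive_indefinite_description as [a' Ea']; simpl. apply ginj in Ea'. subst; auto.
  - exfalso; apply H; eauto. Qed.

Lemma iC_nA c (H : ~ exists a, c = g a) : iC c = inr (exist _ c H).
Proof. unfold iC. destruct excluded_middle_informative as [H'|H'].
  - contradiction. - f_equal. f_equal. apply proof_irrelevance. Qed.

Lemma cross_g b c p : gate dA dC g c p -> cross b c = Rbar_plus (dB b (f p)) (dC (g p) c).
Proof. intros Hp. unfold cross. destruct excluded_middle_informative as [H|H].
  - destruct constructive_indefinite_description as [q Hq]; simpl.
    assert (q = p) by (apply (gate_unique HA HC Hq Hp)). subst; auto.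
  - exfalso; apply H; eauto. Qed.

Lemma cross_n b c : ~ (exists p, gate dA dC g c p) -> cross b c = p_infty.
Proof. intros N. unfold cross. destruct excluded_middle_informative as [H|H]; auto. contradiction. Qed.

Lemma gate_of_comp c a : comp dC c (g a) -> exists p, gate dA dC g c p.
Proof. intros H. apply (gate_exists HA HC g Hgd c). eauto. Qed.

Lemma cross_nn b c : Rbar_le (Finite 0) (cross b c).
Proof. destruct (classic (exists p, gate dA dC g c p)) as [[p Hp]|N].
  - rewrite (cross_g b Hp). assert (H1 := nnB b (f p)). assert (H2 := nnC (g p) c). crunch.
  - rewrite cross_n; simpl; auto. Qed.
Local Hint Resolve cross_nn : rbnn.

Lemma cross_A a c : cross (f a) c = dC (g a) c.
Proof.
  destruct (classic (exists p, gate dA dC g c p)) as [[p Hp]|N].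
  - rewrite (cross_g _ Hp). destruct Hp as [Cp Hp]. specialize (Hp a). rewrite Hfd.
    rewrite (d_sym HmC (g a)), Hp, (d_sym HmC (g p)), Rbar_plus_comm. f_equal; apply (d_sym HmA).
  - rewrite cross_n by auto. rewrite (d_sym HmC). symmetry. apply (gate_far HC g c).
    intros [a' Ha']. apply N. eapply gate_of_comp; eauto.
Qed.

Lemma cross_F1 b b' c : Rbar_le (cross b c) (Rbar_plus (dB b b') (cross b' c)).
Proof. destruct (classic (exists p, gate dA dC g c p)) as [[p Hp]|N].
  - rewrite !(cross_g _ Hp). assert (T := d_tri HmB b b' (f p)). crunch.
  - rewrite !cross_n by auto. crunch. Qed.

Lemma cross_F2 b b' c : Rbar_le (dB b b') (Rbar_plus (cross b c) (cross b' c)).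
Proof. destruct (classic (exists p, gate dA dC g c p)) as [[p Hp]|N].
  - rewrite !(cross_g _ Hp). assert (T := d_tri HmB b (f p) b'). rewrite (d_sym HmB (f p) b') in T. crunch.
  - rewrite !cross_n by auto. crunch. Qed.

Lemma cross_F3 b c c' : Rbar_le (cross b c') (Rbar_plus (cross b c) (dC c c')).
Proof.
  destruct (classic (exists p, gate dA dC g c p)) as [[p Hp]|N].
  2:{ rewrite (cross_n b N). crunch. }
  destruct (classic (exists p, gate dA dC g c' p)) as [[p' Hp']|N'].
  - rewrite (cross_g _ Hp), (cross_g _ Hp'). destruct Hp' as [Cp' Hp']. specialize (Hp' p).
    assert (T1 := d_tri HmB b (f p) (f p')). rewrite Hfd in T1.
    assert (T2 := d_tri HmC (g p) c c'). assert (S1 := d_sym HmC c' (g p)). assert (S2 := d_sym HmC c' (g p')).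
    assert (S3 := d_sym HmA p p'). unfold comp in Cp'. crunch.
  - rewrite (cross_n b N'). destruct Hp as [Cp _].
    assert (dC c c' = p_infty).
    { destruct (classic (comp dC c c')) as [Cc|Cc].
      - exfalso. apply N'. apply gate_of_comp with p. apply comp_trans with c; auto. apply comp_sym; auto.
      - unfold comp in Cc. generalize (nnC c c'). destruct (dC c c'); simpl in *; tauto. }
    rewrite H. crunch.
Qed.

Lemma cross_F4 b c c' : Rbar_le (dC c c') (Rbar_plus (cross b c) (cross b c')).
Proof.
  destruct (classic (exists p, gate dA dC g c p)) as [[p Hp]|N].
  2:{ rewrite (cross_n b N). crunch. }
  destruct (classic (exists p, gate dA dC g c' p)) as [[p' Hp']|N'].
  2:{ rewrite (cross_n b N'). crunch. }
  rewrite (cross_g _ Hp), (cross_g _ Hp').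
  assert (T1 := d_tri HmC c (g p) c'). assert (T2 := d_tri HmC (g p) (g p') c'). rewrite Hgd in T2.
  assert (T3 := d_tri HmB (f p) b (f p')). rewrite Hfd in T3. assert (S1 := d_sym HmB (f p) b).
  assert (S2 := d_sym HmC c (g p)). crunch.
Qed.

Lemma dD_sym x y : dD x y = dD y x.
Proof. destruct x, y; simpl; auto; [apply (d_sym HmB) | apply (d_sym HmC)]. Qed.

Lemma dD_nn x y : Rbar_le (Finite 0) (dD x y).
Proof. destruct x, y; cbn [dD]; auto with rbnn. Qed.
Local Hint Resolve dD_nn : rbnn.

Lemma HD : ext_metric dD.
Proof.
  split; [exact dD_nn|]. split; [|split; [|split; [exact dD_sym|]]].
  - intros [b|c]; simpl; apply d_refl; auto.
  - intros [b|[c Hc]] [b'|[c' Hc']]; cbn [dD proj1_sig]; intros E.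
    + f_equal; apply (d_eq0 HmB); auto.
    + exfalso. destruct (classic (exists p, gate dA dC g c' p)) as [[p Hp]|N].
      * rewrite (cross_g _ Hp) in E. assert (dC (g p) c' = Finite 0) by crunch.
        apply (d_eq0 HmC) in H. apply Hc'; eauto.
      * rewrite cross_n in E by auto. discriminate.
    + exfalso. destruct (classic (exists p, gate dA dC g c p)) as [[p Hp]|N].
      * rewrite (cross_g _ Hp) in E. assert (dC (g p) c = Finite 0) by crunch.
        apply (d_eq0 HmC) in H. apply Hc; eauto.
      * rewrite cross_n in E by auto. discriminate.
    + apply (d_eq0 HmC) in E. subst c'. f_equal. f_equal. apply proof_irrelevance.
  - intros [b|[c Hc]] [b'|[c' Hc']] [b''|[c'' Hc'']]; cbn [dD proj1_sig].
    + apply d_tri; auto.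
    + apply cross_F1.
    + apply cross_F2.
    + apply cross_F3.
    + rewrite Rbar_plus_comm, (d_sym HmB). apply cross_F1.
    + apply cross_F4.
    + assert (H := cross_F3 b'' c' c). rewrite (d_sym HmC) in H. rewrite Rbar_plus_comm. auto.
    + apply d_tri; auto.
Qed.

Let iB : B -> DT := inl.

Lemma HiB x y : dD (iB x) (iB y) = dB x y.
Proof. reflexivity. Qed.

Lemma HiC x y : dD (iC x) (iC y) = dC x y.
Proof.
  destruct (classic (exists a, x = g a)) as [[a Ea]|Na]; destruct (classic (exists a, y = g a)) as [[a' Ea']|Na'].
  - subst. rewrite !iC_A. simpl. rewrite Hfd, Hgd; auto.
  - subst. rewrite iC_A, (iC_nA Na'). simpl. apply cross_A.
  - subst. rewrite (iC_nA Na), iC_A. simpl. rewrite cross_A. apply d_sym; auto.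
  - rewrite (iC_nA Na), (iC_nA Na'). reflexivity.
Qed.

Lemma dD_BC b c : dD (iB b) (iC c) = cross b c.
Proof.
  destruct (classic (exists a, c = g a)) as [[a Ea]|Na].
  - subst. rewrite iC_A. simpl. assert (Hp : gate dA dC g (g a) a).
    { split. apply comp_refl; auto. intros a'. rewrite (d_refl HmC), Hgd. crunch. }
    rewrite (cross_g _ Hp), (d_refl HmC). crunch.
  - rewrite (iC_nA Na). reflexivity.
Qed.

Lemma Hcov z : (exists b, z = iB b) \/ (exists c, z = iC c).
Proof. destruct z as [b|[c Hc]]. left; exists b; auto. right; exists c. rewrite (iC_nA Hc); auto. Qed.

Lemma Hglue1 a : iB (f a) = iC (g a).
Proof. rewrite iC_A; auto. Qed.

Lemma Hglue2 b c : iB b = iC c -> exists a, b = f a /\ c = g a.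
Proof.
  intros E. destruct (classic (exists a, c = g a)) as [[a Ea]|Na].
  - subst. rewrite iC_A in E. injection E; intros; subst. eauto.
  - rewrite (iC_nA Na) in E. discriminate.
Qed.

Lemma Hcr1 b c a : Rbar_le (dD (iB b) (iC c)) (Rbar_plus (dB b (f a)) (dC (g a) c)).
Proof.
  rewrite dD_BC. destruct (classic (exists p, gate dA dC g c p)) as [[p Hp]|N].
  - rewrite (cross_g _ Hp). destruct Hp as [Cp Hp]. specialize (Hp a).
    assert (T := d_tri HmB b (f a) (f p)). rewrite Hfd in T.
    assert (S1 := d_sym HmC c (g a)). assert (S2 := d_sym HmC c (g p)). assert (S3 := d_sym HmA a p). crunch.
  - rewrite cross_n by auto. rewrite (d_sym HmC), (gate_far HC g c).
    + crunch.
    + intros [a' Ha']. apply N. eapply gate_of_comp; eauto.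
Qed.

Lemma Hcr2 b c : Rbar_lt (dD (iB b) (iC c)) p_infty ->
  exists a, dD (iB b) (iC c) = Rbar_plus (dB b (f a)) (dC (g a) c).
Proof.
  rewrite dD_BC. intros H. destruct (classic (exists p, gate dA dC g c p)) as [[p Hp]|N].
  - exists p. apply cross_g; auto.
  - rewrite cross_n in H by auto. simpl in H. contradiction.
Qed.

Lemma D_forest : is_Rforest dD.
Proof.
  apply (glue_forest HA HB HC f g Hfd Hgd HD iB iC HiB HiC Hcov Hglue1 Hglue2 Hcr1 Hcr2).
Qed.

Lemma abs_le a r : Rabs a <= r -> - r <= a <= r.
Proof. unfold Rabs; destruct Rcase_abs; lra. Qed.

Lemma lipM (M : RFRmodel) x y x' y' z1 z2 : mdist M x x' = Finite z1 -> mdist M y y' = Finite z2 ->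
  mpred M x y <= mpred M x' y' + z1 + z2.
Proof.
  intros E1 E2. destruct (m_lip M) as [_ [H2 H3]].
  specialize (H3 y x x'). specialize (H2 x' y y'). rewrite E1 in H3. rewrite E2 in H2. simpl in *.
  apply abs_le in H3. apply abs_le in H2. lra.
Qed.
Arguments lipM M x y x' y' [z1 z2] _ _.

Lemma pred_range (M : RFRmodel) x y : 0 <= mpred M x y <= 1.
Proof. apply (m_lip M). Qed.

Lemma fin_split X Y z : Rbar_plus X Y = Finite z -> Rbar_le (Finite 0) X -> Rbar_le (Finite 0) Y ->
  exists x y, X = Finite x /\ Y = Finite y /\ z = x + y /\ 0 <= x /\ 0 <= y.
Proof. destruct X as [x| |], Y as [y| |]; simpl; intros E H1 H2; try discriminate; try contradiction.
  injection E; intros; exists x, y; repeat split; auto; lra. Qed.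
Arguments fin_split [X Y z] _ _ _.

Local Notation RA := (mpred A).
Local Notation RB := (mpred B).
Local Notation RC := (mpred C).
Let Hfp : forall x y, RB (f x) (f y) = RA x y := proj2 Hf.
Let Hgp : forall x y, RC (g x) (g y) = RA x y := proj2 Hg.

Definition Known (s t : DT) (r : R) :=
  (exists b b', s = iB b /\ t = iB b' /\ r = RB b b') \/ (exists c c', s = iC c /\ t = iC c' /\ r = RC c c').

Definition cl (r : R) (e : Rbar) : R := match e with Finite z => Rmin 1 (r + z) | _ => 1 end.

Definition Eset u v y := exists s t r, Known s t r /\ y = cl r (Rbar_plus (dD u s) (dD v t)).

Lemma Known_range s t r : Known s t r -> 0 <= r <= 1.
Proof. intros [[b [b' [_ [_ E]]]]|[c [c' [_ [_ E]]]]]; subst; apply pred_range. Qed.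

Lemma Eset_range u v y : Eset u v y -> 0 <= y <= 1.
Proof.
  intros [s [t [r [K E]]]]. apply Known_range in K. subst y.
  assert (H1 := dD_nn u s). assert (H2 := dD_nn v t).
  destruct (dD u s) as [x| |], (dD v t) as [x'| |]; simpl in *; try contradiction; try lra.
  split. apply Rmin_glb; lra. apply Rmin_l.
Qed.

Lemma Known_self u : exists r, Known u u r.
Proof. destruct (Hcov u) as [[b Eb]|[c Ec]].
  - exists (RB b b). left. exists b, b. auto.
  - exists (RC c c). right. exists c, c. auto. Qed.

Lemma N_bound u v : bound (fun w => Eset u v (- w)).
Proof. exists 0. intros w H. apply Eset_range in H. lra. Qed.

Lemma N_ne u v : exists w, Eset u v (- w).
Proof. destruct (Known_self u) as [r K]. exists (- cl r (Rbar_plus (dD u u) (dD v u))).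
  exists u, u, r. split; auto. ring. Qed.

Definition RD u v : R := - proj1_sig (completeness _ (N_bound u v) (N_ne u v)).

Lemma RD_lb u v y : Eset u v y -> RD u v <= y.
Proof. intros H. unfold RD. destruct completeness as [l [Hub Hlub]]. simpl.
  assert (- y <= l) by (apply Hub; replace (- - y) with y by ring; auto). lra. Qed.

Lemma RD_glb u v m : (forall y, Eset u v y -> m <= y) -> m <= RD u v.
Proof. intros H. unfold RD. destruct completeness as [l [Hub Hlub]]. simpl.
  assert (l <= - m). { apply Hlub. intros w Hw. apply H in Hw. lra. } lra. Qed.

Lemma RD_range u v : 0 <= RD u v <= 1.
Proof. split.
  - apply RD_glb. intros y Hy. apply Eset_range in Hy; lra.
  - destruct (N_ne u v) as [w Hw]. assert (H := RD_lb Hw). apply Eset_range in Hw. lra.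
Qed.

Lemma KL s t r s' t' r' z : Known s t r -> Known s' t' r' -> Rbar_plus (dD s s') (dD t t') = Finite z -> r <= r' + z.
Proof.
  intros K K' E. destruct (fin_split E (dD_nn _ _) (dD_nn _ _)) as [x [y [Ex [Ey [Ez [Hx Hy]]]]]]. subst z.
  destruct K as [[b1 [b2 [E1 [E2 Er]]]]|[c1 [c2 [E1 [E2 Er]]]]];
  destruct K' as [[b1' [b2' [E1' [E2' Er']]]]|[c1' [c2' [E1' [E2' Er']]]]]; subst s t s' t' r r'.
  - rewrite HiB in Ex, Ey. assert (H := lipM B b1 b2 b1' b2' Ex Ey). lra.
  - assert (F1 : Rbar_lt (dD (iB b1) (iC c1')) p_infty) by (rewrite Ex; simpl; auto).
    assert (F2 : Rbar_lt (dD (iB b2) (iC c2')) p_infty) by (rewrite Ey; simpl; auto).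
    destruct (Hcr2 _ _ F1) as [a1 Ea1]. destruct (Hcr2 _ _ F2) as [a2 Ea2].
    rewrite Ex in Ea1. rewrite Ey in Ea2. symmetry in Ea1, Ea2.
    destruct (fin_split Ea1 (nnB _ _) (nnC _ _)) as [x1 [x2 [X1 [X2 [Xs _]]]]].
    destruct (fin_split Ea2 (nnB _ _) (nnC _ _)) as [y1 [y2 [Y1 [Y2 [Ys _]]]]].
    assert (L1 := lipM B b1 b2 (f a1) (f a2) X1 Y1). rewrite Hfp in L1.
    assert (L2 := lipM C (g a1) (g a2) c1' c2' X2 Y2). rewrite Hgp in L2. lra.
  - rewrite (dD_sym) in Ex, Ey.
    assert (F1 : Rbar_lt (dD (iB b1') (iC c1)) p_infty) by (rewrite Ex; simpl; auto).
    assert (F2 : Rbar_lt (dD (iB b2') (iC c2)) p_infty) by (rewrite Ey; simpl; auto).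
    destruct (Hcr2 _ _ F1) as [a1 Ea1]. destruct (Hcr2 _ _ F2) as [a2 Ea2].
    rewrite Ex in Ea1. rewrite Ey in Ea2. symmetry in Ea1, Ea2.
    destruct (fin_split Ea1 (nnB _ _) (nnC _ _)) as [x1 [x2 [X1 [X2 [Xs _]]]]].
    destruct (fin_split Ea2 (nnB _ _) (nnC _ _)) as [y1 [y2 [Y1 [Y2 [Ys _]]]]].
    rewrite (d_sym HmB) in X1, Y1.
    assert (L1 := lipM B (f a1) (f a2) b1' b2' X1 Y1). rewrite Hfp in L1.
    rewrite (d_sym HmC) in X2, Y2. assert (L2 := lipM C c1 c2 (g a1) (g a2) X2 Y2). rewrite Hgp in L2. lra.
  - rewrite HiC in Ex, Ey. assert (H := lipM C c1 c2 c1' c2' Ex Ey). lra.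
Qed.

Lemma RD_known u v r : Known u v r -> RD u v = r.
Proof.
  intros K. assert (Hr := Known_range K). apply Rle_antisym.
  - apply RD_lb. exists u, v, r. split; auto.
    rewrite (d_refl HD), (d_refl HD). simpl. unfold Rmin; destruct Rle_dec; lra.
  - apply RD_glb. intros y [s [t [r' [K' E]]]]. subst y.
    destruct (Rbar_plus (dD u s) (dD v t)) as [z| |] eqn:Ez; simpl; try lra.
    apply Rmin_glb; [lra|]. apply (KL K K' Ez).
Qed.

Lemma cl_lip r e e' z : 0 <= r -> 0 <= z -> Rbar_le (Finite 0) e -> Rbar_le (Finite 0) e' ->
  Rbar_le e' (Rbar_plus (Finite z) e) -> cl r e' <= cl r e + z.
Proof.
  intros Hr Hz He He' H. destruct e as [w| |], e' as [w'| |]; simpl in *; try contradiction; try lra.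
  - assert (Rmin 1 (r + w') <= Rmin 1 (r + w) + z); [|lra].
    unfold Rmin; repeat destruct Rle_dec; lra.
  - assert (Rmin 1 (r + w') <= 1) by apply Rmin_l. lra.
Qed.

Lemma RD_step1 u u' v z : dD u u' = Finite z -> RD u' v <= RD u v + z.
Proof.
  intros Ez. assert (Hz : 0 <= z) by (generalize (dD_nn u u'); rewrite Ez; simpl; auto).
  assert (RD u' v - z <= RD u v); [|lra]. apply RD_glb. intros y [s [t [r [K E]]]]. subst y.
  assert (H := @RD_lb u' v (cl r (Rbar_plus (dD u' s) (dD v t)))).
  assert (H' : RD u' v <= cl r (Rbar_plus (dD u' s) (dD v t))) by (apply H; exists s, t, r; auto).
  assert (cl r (Rbar_plus (dD u' s) (dD v t)) <= cl r (Rbar_plus (dD u s) (dD v t)) + z); [|lra].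
  apply cl_lip; auto. apply (Known_range K).
  - assert (H1 := dD_nn u s). assert (H2 := dD_nn v t). crunch.
  - assert (H1 := dD_nn u' s). assert (H2 := dD_nn v t). crunch.
  - assert (T := proj2 (proj2 (proj2 (proj2 HD))) u' u s). rewrite (dD_sym u' u), Ez in T. crunch.
Qed.

Lemma RD_step2 v v' u z : dD v v' = Finite z -> RD u v' <= RD u v + z.
Proof.
  intros Ez. assert (Hz : 0 <= z) by (generalize (dD_nn v v'); rewrite Ez; simpl; auto).
  assert (RD u v' - z <= RD u v); [|lra]. apply RD_glb. intros y [s [t [r [K E]]]]. subst y.
  assert (H := @RD_lb u v' (cl r (Rbar_plus (dD u s) (dD v' t)))).
  assert (H' : RD u v' <= cl r (Rbar_plus (dD u s) (dD v' t))) by (apply H; exists s, t, r; auto).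
  assert (cl r (Rbar_plus (dD u s) (dD v' t)) <= cl r (Rbar_plus (dD u s) (dD v t)) + z); [|lra].
  apply cl_lip; auto. apply (Known_range K).
  - assert (H1 := dD_nn u s). assert (H2 := dD_nn v t). crunch.
  - assert (H1 := dD_nn u s). assert (H2 := dD_nn v' t). crunch.
  - assert (T := proj2 (proj2 (proj2 (proj2 HD))) v' v t). rewrite (dD_sym v' v), Ez in T. crunch.
Qed.

Lemma D_lip : one_one_lipschitz dD RD.
Proof.
  split; [exact RD_range|]. split.
  - intros a x y. destruct (dD x y) as [z| |] eqn:E; simpl; auto.
    assert (E' : dD y x = Finite z) by (rewrite dD_sym; auto).
    assert (H1 := RD_step2 x y a E). assert (H2 := RD_step2 y x a E'). unfold Rabs; destruct Rcase_abs; lra.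
    generalize (dD_nn x y); rewrite E; simpl; auto.
  - intros a x y. destruct (dD x y) as [z| |] eqn:E; simpl; auto.
    assert (E' : dD y x = Finite z) by (rewrite dD_sym; auto).
    assert (H1 := RD_step1 x y a E). assert (H2 := RD_step1 y x a E'). unfold Rabs; destruct Rcase_abs; lra.
    generalize (dD_nn x y); rewrite E; simpl; auto.
Qed.

Definition Dmodel : RFRmodel := {| carrier := DT; mdist := dD; mpred := RD; m_forest := D_forest; m_lip := D_lip |}.

Lemma amalgam : exists (Dm : RFRmodel) (f' : B -> Dm) (g' : C -> Dm),
  embedding B Dm f' /\ embedding C Dm g' /\ forall a, f' (f a) = g' (g a).
Proof.
  exists Dmodel, iB, iC. split; [|split].
  - split. exact HiB. intros x y. simpl. apply RD_known. left. exists x, y. auto.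
  - split. exact HiC. intros x y. simpl. apply RD_known. right. exists x, y. auto.
  - exact Hglue1.
Qed.

End Concrete.

Definition Edist (x y : Empty_set) : Rbar := match x with end.
Definition Epred (x y : Empty_set) : R := match x with end.

Lemma E_forest : is_Rforest Edist.
Proof.
  split; [|split].
  - repeat split; intros x; destruct x.
  - intros u. destruct (u 0%nat).
  - intros x; destruct x.
Qed.

Lemma E_lip : one_one_lipschitz Edist Epred.
Proof. split; [|split]; intros x; destruct x. Qed.

Definition Emodel : RFRmodel := {| carrier := Empty_set; mdist := Edist; mpred := Epred; m_forest := E_forest; m_lip := E_lip |}.

Theorem proposition2p20 :
  (forall A B : RFRmodel, exists (C : RFRmodel) (f : A -> C) (g : B -> C),
      embedding A C f /\ embedding B C g) /\
  (forall (A B C : RFRmodel) (f : A -> B) (g : A -> C),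
      embedding A B f -> embedding A C g ->
      exists (D : RFRmodel) (f' : B -> D) (g' : C -> D),
        embedding B D f' /\ embedding C D g' /\ forall a, f' (f a) = g' (g a)).
Proof.
  split.
  - intros A B.
    set (f0 := fun e : Emodel => match e return (A : Type) with end).
    set (g0 := fun e : Emodel => match e return (B : Type) with end).
    assert (Hf : embedding Emodel A f0) by (split; intros x; destruct x).
    assert (Hg : embedding Emodel B g0) by (split; intros x; destruct x).
    destruct (amalgam Hf Hg) as [D [f' [g' [H1 [H2 _]]]]].
    exists D, f', g'. auto.
  - intros A B C f g Hf Hg. apply (amalgam Hf Hg).
Qed.
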